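(* Consider two coplanar ellipses with a common focus at the origin of $\mathbb{R}^2$, parametrized by their true anomalies $f_1,f_2$: \[ \mathcal{X}_1(f_1)=\frac{p_1}{1+e_1\cos f_1}(\cos f_1,\ \sin f_1),\qquad \mathcal{X}_2(f_2)=\frac{p_2}{1+e_2\cos f_2}\bigl(\cos(f_2+\omega_2),\ \sin(f_2+\omega_2)\bigr), \] with $p_1,p_2>0$, $e_1,e_2\in[0,1)$, $\omega_2\in\mathbb{R}$, and let $d^2(f_1,f_2)=|\mathcal{X}_1(f_1)-\mathcal{X}_2(f_2)|^2$ on the torus $(\mathbb{R}/2\pi\mathbb{Z})^2$. Then, in general (i.e. for generic values of $p_1,p_2,e_1,e_2,\omega_2$), the function $d^2$ has at most $10$ critical points that do not correspond to trajectory intersections (points with $d^2(f_1,f_2)=0$), and hence at most $12$ critical points in total.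
   Context: A critical point of $d^2$ is a point $(f_1,f_2)$ where both partial derivatives of $d^2$ vanish; a trajectory intersection is a critical point with $d^2(f_1,f_2)=0$. *)

(* Defs.v *)
From Stdlib Require Import Reals List.
From Coquelicot Require Import Coquelicot.
Open Scope R_scope.

Definition X1 (p1 e1 f1 : R) : R * R :=
  (p1 / (1 + e1 * cos f1) * cos f1, p1 / (1 + e1 * cos f1) * sin f1).

Definition X2 (p2 e2 om2 f2 : R) : R * R :=
  (p2 / (1 + e2 * cos f2) * cos (f2 + om2),
   p2 / (1 + e2 * cos f2) * sin (f2 + om2)).

Definition dist2 (p1 e1 p2 e2 om2 f1 f2 : R) : R :=
  (fst (X1 p1 e1 f1) - fst (X2 p2 e2 om2 f2)) ^ 2 +
  (snd (X1 p1 e1 f1) - snd (X2 p2 e2 om2 f2)) ^ 2.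

Definition crit_pt (p1 e1 p2 e2 om2 f1 f2 : R) : Prop :=
  is_derive (fun x => dist2 p1 e1 p2 e2 om2 x f2) f1 0 /\
  is_derive (fun y => dist2 p1 e1 p2 e2 om2 f1 y) f2 0.

(* A point of the torus (R/2piZ)^2, via its representative in [0,2pi)^2. *)
Definition in_torus (f : R * R) : Prop :=
  0 <= fst f < 2 * PI /\ 0 <= snd f < 2 * PI.

Definition admissible (p1 e1 p2 e2 : R) : Prop :=
  0 < p1 /\ 0 < p2 /\ 0 <= e1 < 1 /\ 0 <= e2 < 1.

Definition mono6 : Type := (nat * nat * nat * nat * nat * nat)%type.
Definition poly6 : Type := list (R * mono6).

Definition eval_mono6 (m : mono6) (x1 x2 x3 x4 x5 x6 : R) : R :=
  match m with (a1, a2, a3, a4, a5, a6) =>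
    x1 ^ a1 * x2 ^ a2 * x3 ^ a3 * x4 ^ a4 * x5 ^ a5 * x6 ^ a6 end.

Definition eval_poly6 (Q : poly6) (x1 x2 x3 x4 x5 x6 : R) : R :=
  fold_right (fun cm acc => fst cm * eval_mono6 (snd cm) x1 x2 x3 x4 x5 x6 + acc) 0 Q.

(* Generic parameters: the parameters (p1,p2,e1,e2,cos om2,sin om2) avoid the
   zero set of a polynomial Q that does not vanish identically on the
   admissible parameter set. *)
Definition nondegenerate (Q : poly6) (p1 e1 p2 e2 om2 : R) : Prop :=
  eval_poly6 Q p1 p2 e1 e2 (cos om2) (sin om2) <> 0.

(* Main.v *)
Require Import Defs.
From Stdlib Require Import Reals List Lra Psatz Lia.
From Coquelicot Require Import Coquelicot.
From mathcomp Require all_boot all_algebra Rstruct.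
Open Scope R_scope.

Module RootsMC.
Import all_boot all_algebra Rstruct.
Import GRing.Theory Num.Theory.
Local Open Scope ring_scope.

Lemma roots_bound_mc (n : nat) (a : nat -> R) (rs : list R) :
  a n <> 0 -> List.NoDup rs ->
  (forall r, List.In r rs -> sum_f_R0 (fun k => Rmult (a k) (pow r k)) n = 0%R) ->
  (size rs <= n)%N.
Proof.
move=> an0 nd hr.
set p : {poly R} := \poly_(i < n.+1) a i.
have pn0 : p != 0.
  apply/eqP => p0; apply: an0.
  by have := coef_poly n.+1 a n; rewrite -/p p0 coef0 ltnSn => ->.
have uq : uniq rs.
  elim: rs nd {hr} => [|r rs IH] //= nd.
  inversion nd; subst.
  rewrite IH // andbT; apply/negP => hin; apply: H1.
  elim: rs {IH nd H2} hin => [|y ys IHy] //=.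
  by rewrite in_cons => /orP [/eqP ->|/IHy]; [left|right].
have rt : all (root p) rs.
  apply/allP => r hin; rewrite /root /p horner_poly.
  have hI : List.In r rs.
    elim: rs {nd hr uq} hin => [|y ys IHy] //=.
    by rewrite in_cons => /orP [/eqP ->|/IHy]; [left|right].
  have := hr r hI; rewrite sum_f_R0E => h.
  apply/eqP; rewrite -[RHS]h big_mkord; apply: eq_bigr => i _.
  by rewrite RmultE RpowE.
have := max_poly_roots pn0 rt uq.
have sz : (size p <= n.+1)%N by apply: size_poly.
move=> h; rewrite -ltnS; exact: leq_trans h sz.
Qed.

Lemma roots_bound0 (n : nat) (a : nat -> R) (rs : list R) :
  a n <> 0 -> List.NoDup rs ->
  (forall r, List.In r rs -> sum_f_R0 (fun k => Rmult (a k) (pow r k)) n = 0%R) ->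
  (List.length rs <= n)%coq_nat.
Proof.
move=> h1 h2 h3; have -> : List.length rs = size rs by elim: rs {h2 h3} => //= x l ->.
by apply/ssrnat.leP; exact: (roots_bound_mc n a rs h1 h2 h3).
Qed.
End RootsMC.

Lemma roots_bound (n : nat) (a : nat -> R) (rs : list R) :
  a n <> 0 -> NoDup rs ->
  (forall r, In r rs -> sum_f_R0 (fun k => a k * r ^ k) n = 0) ->
  (length rs <= n)%nat.
Proof. intros h1 h2 h3. exact (RootsMC.roots_bound0 n a rs h1 h2 h3). Qed.

Lemma count_by_rel {A : Type} (Rel : A -> R -> Prop) (P : R -> Prop) (l : list A) :
  NoDup l ->
  (forall f, In f l -> exists x, Rel f x /\ P x) ->
  (forall f f' x, In f l -> In f' l -> Rel f x -> Rel f' x -> f = f') ->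
  exists xs, NoDup xs /\ length xs = length l /\ (forall x, In x xs -> P x) /\
     (forall x, In x xs -> exists f, In f l /\ Rel f x).
Proof.
induction l as [|a l IH]; intros Hnd Hex Hinj.
- exists nil. simpl. repeat split; auto; try constructor; intros x [].
- inversion Hnd as [|? ? Hnotin Hndl]; subst.
  destruct IH as [xs [H1 [H2 [H3 H4]]]]; auto.
  + intros f Hf; apply Hex; simpl; auto.
  + intros f f' x Hf Hf'; apply Hinj; simpl; auto.
  + destruct (Hex a (or_introl eq_refl)) as [x [Hx1 Hx2]].
    exists (x :: xs). repeat split.
    * constructor; auto. intro Hin. destruct (H4 x Hin) as [f [Hf Hrel]].
      assert (a = f) by (apply (Hinj a f x); simpl; auto). subst. contradiction.
    * simpl; auto.
    * intros y [<-|Hy]; auto.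
    * intros y [<-|Hy]. exists a; simpl; auto.
      destruct (H4 y Hy) as [f [Hf Hr]]. exists f; simpl; auto.
Qed.

Lemma count_le {A : Type} (Rel : A -> R -> Prop) (n : nat) (a : nat -> R) (l : list A) :
  a n <> 0 -> NoDup l ->
  (forall f, In f l -> exists x, Rel f x /\ sum_f_R0 (fun k => a k * x ^ k) n = 0) ->
  (forall f f' x, In f l -> In f' l -> Rel f x -> Rel f' x -> f = f') ->
  (length l <= n)%nat.
Proof.
intros Ha Hnd Hex Hinj.
destruct (count_by_rel Rel (fun x => sum_f_R0 (fun k => a k * x ^ k) n = 0) l Hnd Hex Hinj)
  as [xs [H1 [H2 [H3 _]]]].
rewrite <- H2. apply (roots_bound n a); auto.
Qed.

Inductive pe : Type :=
| PV : nat -> pe | PC : R -> pe | PA : pe -> pe -> pe | PM : pe -> pe -> pe | PN : pe -> pe.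

Definition mvar (i : nat) : mono6 :=
  match i with
  | 0 => (1,0,0,0,0,0) | 1 => (0,1,0,0,0,0) | 2 => (0,0,1,0,0,0)
  | 3 => (0,0,0,1,0,0) | 4 => (0,0,0,0,1,0) | _ => (0,0,0,0,0,1) end%nat.

Definition madd (m n : mono6) : mono6 :=
  match m, n with (a1,a2,a3,a4,a5,a6), (b1,b2,b3,b4,b5,b6) =>
    (a1+b1, a2+b2, a3+b3, a4+b4, a5+b5, a6+b6)%nat end.

Definition pmul (P Q : poly6) : poly6 :=
  flat_map (fun cm => map (fun dn => (fst cm * fst dn, madd (snd cm) (snd dn))) Q) P.

Fixpoint topoly (e : pe) : poly6 :=
  match e with
  | PV i => (1, mvar i) :: nil
  | PC r => (r, (0,0,0,0,0,0)%nat) :: nil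
  | PA a b => topoly a ++ topoly b
  | PM a b => pmul (topoly a) (topoly b)
  | PN a => map (fun cm => (- fst cm, snd cm)) (topoly a)
  end.

Fixpoint peval (e : pe) (x1 x2 x3 x4 x5 x6 : R) : R :=
  match e with
  | PV i => match i with 0 => x1 | 1 => x2 | 2 => x3 | 3 => x4 | 4 => x5 | _ => x6 end%nat
  | PC r => r
  | PA a b => peval a x1 x2 x3 x4 x5 x6 + peval b x1 x2 x3 x4 x5 x6
  | PM a b => peval a x1 x2 x3 x4 x5 x6 * peval b x1 x2 x3 x4 x5 x6
  | PN a => - peval a x1 x2 x3 x4 x5 x6
  end.

Lemma eval_app P Q x1 x2 x3 x4 x5 x6 :
  eval_poly6 (P ++ Q) x1 x2 x3 x4 x5 x6 = eval_poly6 P x1 x2 x3 x4 x5 x6 + eval_poly6 Q x1 x2 x3 x4 x5 x6.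
Proof. induction P as [|a P IH]; simpl; [ring|]. unfold eval_poly6 in *. simpl. rewrite IH. ring. Qed.

Lemma eval_madd m n x1 x2 x3 x4 x5 x6 :
  eval_mono6 (madd m n) x1 x2 x3 x4 x5 x6 = eval_mono6 m x1 x2 x3 x4 x5 x6 * eval_mono6 n x1 x2 x3 x4 x5 x6.
Proof.
destruct m as [[[[[a1 a2] a3] a4] a5] a6]; destruct n as [[[[[b1 b2] b3] b4] b5] b6].
simpl. rewrite !pow_add. ring.
Qed.

Lemma eval_map_scale c m Q x1 x2 x3 x4 x5 x6 :
  eval_poly6 (map (fun dn => (c * fst dn, madd m (snd dn))) Q) x1 x2 x3 x4 x5 x6
  = c * eval_mono6 m x1 x2 x3 x4 x5 x6 * eval_poly6 Q x1 x2 x3 x4 x5 x6.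
Proof.
induction Q as [|a Q IH]; unfold eval_poly6 in *; simpl; [ring|].
rewrite IH, eval_madd. ring.
Qed.

Lemma eval_pmul P Q x1 x2 x3 x4 x5 x6 :
  eval_poly6 (pmul P Q) x1 x2 x3 x4 x5 x6 = eval_poly6 P x1 x2 x3 x4 x5 x6 * eval_poly6 Q x1 x2 x3 x4 x5 x6.
Proof.
induction P as [|a P IH]; unfold pmul in *; simpl.
- unfold eval_poly6; simpl; ring.
- rewrite eval_app, eval_map_scale, IH.
  assert (Hc : eval_poly6 (a :: P) x1 x2 x3 x4 x5 x6 = fst a * eval_mono6 (snd a) x1 x2 x3 x4 x5 x6 + eval_poly6 P x1 x2 x3 x4 x5 x6) by reflexivity.
  ring.
Qed.

Lemma eval_neg P x1 x2 x3 x4 x5 x6 :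
  eval_poly6 (map (fun cm => (- fst cm, snd cm)) P) x1 x2 x3 x4 x5 x6 = - eval_poly6 P x1 x2 x3 x4 x5 x6.
Proof. induction P as [|a P IH]; unfold eval_poly6 in *; simpl; [ring|]. rewrite IH. ring. Qed.

Lemma eval_topoly e x1 x2 x3 x4 x5 x6 :
  eval_poly6 (topoly e) x1 x2 x3 x4 x5 x6 = peval e x1 x2 x3 x4 x5 x6.
Proof.
induction e as [i|r|a IHa b IHb|a IHa b IHb|a IHa]; simpl.
- unfold eval_poly6; simpl. destruct i as [|[|[|[|[|i]]]]]; simpl; ring.
- unfold eval_poly6; simpl. ring.
- rewrite eval_app, IHa, IHb. reflexivity.
- rewrite eval_pmul, IHa, IHb. reflexivity.
- rewrite eval_neg, IHa. reflexivity.
Qed.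

Definition Ap (p1 e1 e2 : R) := p1*e1*(1-e2^2).
Definition Bp (p2 e1 e2 : R) := p2*e2*(1-e1^2).
Definition Lf (A B cw sw c s : R) := A*s - B*(s*cw - c*sw).
Definition Pf (A e1 c s : R) := A*e1*s*c.
Definition Qf (B e2 cw sw c s : R) := B*e2*(s*cw - c*sw)*(c*cw + s*sw).
Definition D1f (e1 c s : R) := c^2 + s^2 - e1^2*s^2.
Definition D2f (e2 cw sw c s : R) := c^2 + s^2 - e2^2*(s*cw - c*sw)^2.
Definition Gf (L P Q D1 D2 : R) : R :=
  ((L^2*D1 + P^2)*D2 - Q^2*D1)^2 - 4*L^2*P^2*D2^2*D1.
Definition GG (A B e1 e2 cw sw c s : R) :=
  Gf (Lf A B cw sw c s) (Pf A e1 c s) (Qf B e2 cw sw c s) (D1f e1 c s) (D2f e2 cw sw c s).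

Definition Erel (A B e1 e2 cw sw c s l1 l2 : R) : Prop :=
  Lf A B cw sw c s * (l1 - e1*c) * (l2 - e2*(c*cw+s*sw)) =
  Pf A e1 c s * (l2 - e2*(c*cw+s*sw)) - Qf B e2 cw sw c s * (l1 - e1*c).

Lemma elimG (L P Q d1 d2 : R) : L*d1*d2 = P*d2 - Q*d1 -> Gf L P Q (d1^2) (d2^2) = 0.
Proof.
intro H.
assert (Hid : Gf L P Q (d1^2) (d2^2) =
  ((L*d1 - P)*d2 + Q*d1) * ((L*d1 - P)*d2 - Q*d1) *
  (((L*d1 - P)*d2 + Q*d1) * ((L*d1 - P)*d2 - Q*d1) + 4*L*P*d1*d2^2)).
{ unfold Gf. ring. }
rewrite Hid. replace ((L*d1 - P)*d2 + Q*d1) with (L*d1*d2 - (P*d2 - Q*d1)) by ring.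
rewrite H. ring.
Qed.

Lemma GG_homog A B e1 e2 cw sw x s :
  GG A B e1 e2 cw sw (x*s) s = s^12 * GG A B e1 e2 cw sw x 1.
Proof.
unfold GG.
replace (Lf A B cw sw (x*s) s) with (s * Lf A B cw sw x 1) by (unfold Lf; ring).
replace (Pf A e1 (x*s) s) with (s^2 * Pf A e1 x 1) by (unfold Pf; ring).
replace (Qf B e2 cw sw (x*s) s) with (s^2 * Qf B e2 cw sw x 1) by (unfold Qf; ring).
replace (D1f e1 (x*s) s) with (s^2 * D1f e1 x 1) by (unfold D1f; ring).
replace (D2f e2 cw sw (x*s) s) with (s^2 * D2f e2 cw sw x 1) by (unfold D2f; ring).
unfold Gf. ring.
Qed.

Lemma GG_s0 A B e1 e2 cw sw c :
  GG A B e1 e2 cw sw c 0 = c^12 * (B^4*sw^4*(1 - e2^2*(cw^2+sw^2))^2).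
Proof. unfold GG, Gf, Lf, Pf, Qf, D1f, D2f. ring. Qed.

Lemma E_flip A B e1 e2 cw sw c s l1 l2 :
  Erel A B e1 e2 cw sw c s l1 l2 -> Erel A B e1 e2 cw sw (-c) (-s) (-l1) (-l2).
Proof.
unfold Erel, Lf, Pf, Qf. intro H.
replace (-l1 - e1 * - c) with (-(l1 - e1*c)) by ring.
replace (- l2 - e2 * (- c * cw + - s * sw)) with (-(l2 - e2*(c*cw+s*sw))) by ring.
set (d1 := l1 - e1*c) in *. set (d2 := l2 - e2*(c*cw+s*sw)) in *.
replace ((A * - s - B * (- s * cw - - c * sw)) * - d1 * - d2) with (- ((A * s - B * (s * cw - c * sw)) * d1 * d2)) by ring.
rewrite H. ring.
Qed.

Lemma E_GG A B e1 e2 cw sw c s l1 l2 :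
  c^2 + s^2 = 1 -> cw^2 + sw^2 = 1 ->
  (l1*c - e1)^2 + (l1*s)^2 = 1 ->
  (l2*(c*cw+s*sw) - e2)^2 + (l2*(s*cw-c*sw))^2 = 1 ->
  Erel A B e1 e2 cw sw c s l1 l2 -> GG A B e1 e2 cw sw c s = 0.
Proof.
intros Hcs Hw q1 q2 HE.
assert (H1 : (l1 - e1*c)^2 = D1f e1 c s).
{ unfold D1f. assert (Hx : (l1*c - e1)^2 + (l1*s)^2 = l1^2*(c^2+s^2) - 2*l1*e1*c + e1^2) by ring.
  rewrite Hcs in Hx. assert (Hy : c^2 = 1 - s^2) by lra. rewrite Hy. nra. }
assert (H2 : (l2 - e2*(c*cw+s*sw))^2 = D2f e2 cw sw c s).
{ unfold D2f. set (c' := c*cw+s*sw) in *. set (s' := s*cw-c*sw) in *.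
  assert (Hu : c'^2 + s'^2 = 1).
  { unfold c', s'. replace ((c * cw + s * sw) ^ 2 + (s * cw - c * sw) ^ 2) with ((c^2+s^2)*(cw^2+sw^2)) by ring.
    rewrite Hcs, Hw; ring. }
  assert (Hx : (l2*c' - e2)^2 + (l2*s')^2 = l2^2*(c'^2+s'^2) - 2*l2*e2*c' + e2^2) by ring.
  rewrite Hu in Hx. rewrite Hcs. assert (Hy : c'^2 = 1 - s'^2) by lra. nra. }
unfold GG. rewrite <- H1, <- H2. apply elimG. exact HE.
Qed.

Definition DXf (p1 e1 p2 e2 cw sw c1 s1 c2 s2 : R) :=
  p1/(1+e1*c1)*c1 - p2/(1+e2*c2)*(c2*cw - s2*sw).
Definition DYf (p1 e1 p2 e2 cw sw c1 s1 c2 s2 : R) :=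
  p1/(1+e1*c1)*s1 - p2/(1+e2*c2)*(c2*sw + s2*cw).

Lemma core2 p1 e1 p2 e2 cw sw c s l1 l2 :
  0 <= e1 < 1 -> 0 <= e2 < 1 -> cw^2 + sw^2 = 1 -> c^2 + s^2 = 1 ->
  (l1*c - e1)^2 + (l1*s)^2 = 1 ->
  (l2*(c*cw+s*sw) - e2)^2 + (l2*(s*cw-c*sw))^2 = 1 ->
  1 + e1*(l1*c - e1) <> 0 -> 1 + e2*(l2*(c*cw+s*sw) - e2) <> 0 ->
  - DXf p1 e1 p2 e2 cw sw (l1*c - e1) (l1*s) (l2*(c*cw+s*sw) - e2) (l2*(s*cw-c*sw)) * s
  + DYf p1 e1 p2 e2 cw sw (l1*c - e1) (l1*s) (l2*(c*cw+s*sw) - e2) (l2*(s*cw-c*sw)) * c = 0 ->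
  Erel (Ap p1 e1 e2) (Bp p2 e1 e2) e1 e2 cw sw c s l1 l2.
Proof.
intros He1 He2 Hw Hcs q1 q2 Hu1 Hu2 H.
set (c' := c*cw+s*sw) in *. set (s' := s*cw-c*sw) in *.
set (u1 := 1 + e1*(l1*c - e1)) in *. set (u2 := 1 + e2*(l2*c' - e2)) in *.
assert (Hu : c'^2 + s'^2 = 1).
{ unfold c', s'. replace ((c * cw + s * sw) ^ 2 + (s * cw - c * sw) ^ 2) with ((c^2+s^2)*(cw^2+sw^2)) by ring.
  rewrite Hcs, Hw; ring. }
assert (HW : p1*e1*s*u2 - p2*e2*s'*u1 = 0).
{ assert (Hx : - DXf p1 e1 p2 e2 cw sw (l1*c - e1) (l1*s) (l2*c' - e2) (l2*s') * s
  + DYf p1 e1 p2 e2 cw sw (l1*c - e1) (l1*s) (l2*c' - e2) (l2*s') * c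
   = (p1*e1*s*u2 - p2*e2*s'*u1) / (u1*u2)).
  { unfold DXf, DYf. fold u1. fold u2. unfold c', s'. field. split; auto. }
  rewrite Hx in H. apply Rmult_eq_reg_r with (/ (u1*u2)).
  rewrite Rmult_0_l. exact H. apply Rinv_neq_0_compat. apply Rmult_integral_contrapositive_currified; auto. }
assert (q1' : l1^2 - 2*l1*e1*c + e1^2 = 1).
{ assert (Hx : (l1*c - e1)^2 + (l1*s)^2 = l1^2*(c^2+s^2) - 2*l1*e1*c + e1^2) by ring.
  rewrite Hcs in Hx. lra. }
assert (q2' : l2^2 - 2*l2*e2*c' + e2^2 = 1).
{ assert (Hx : (l2*c' - e2)^2 + (l2*s')^2 = l2^2*(c'^2+s'^2) - 2*l2*e2*c' + e2^2) by ring.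
  rewrite Hu in Hx. lra. }
assert (Hu1' : u1 = l1*(l1 - e1*c)) by (unfold u1; lra).
assert (Hu2' : u2 = l2*(l2 - e2*c')) by (unfold u2; lra).
rewrite Hu1', Hu2' in HW.
unfold Erel, Ap, Bp, Lf, Pf, Qf. fold c' s'.
set (d1 := l1 - e1*c) in *. set (d2 := l2 - e2*c') in *.
assert (Hid : (p1 * e1 * (1 - e2 ^ 2) * s - p2 * e2 * (1 - e1 ^ 2) * s') * d1 * d2 -
  (p1 * e1 * (1 - e2 ^ 2) * e1 * s * c * d2 - p2 * e2 * (1 - e1 ^ 2) * e2 * s' * c' * d1)
  = (p1 * e1 * s * (l2 * d2) - p2 * e2 * s' * (l1 * d1)) * (l1 - 2*e1*c) * (l2 - 2*e2*c')
    - (l2^2 - 2*l2*e2*c' + e2^2 - 1) * p1*e1*s*d2*(l1 - 2*e1*c)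
    + (l1^2 - 2*l1*e1*c + e1^2 - 1) * p2*e2*s'*d1*(l2 - 2*e2*c')).
{ unfold d1, d2. ring. }
rewrite HW, q1', q2' in Hid. lra.
Qed.

Lemma core1 p1 e1 p2 e2 cw sw c1 s1 c2 s2 :
  0 <= e1 < 1 -> 0 <= e2 < 1 -> cw^2 + sw^2 = 1 -> c1^2 + s1^2 = 1 -> c2^2 + s2^2 = 1 ->
  DXf p1 e1 p2 e2 cw sw c1 s1 c2 s2 * (- s1) + DYf p1 e1 p2 e2 cw sw c1 s1 c2 s2 * (e1 + c1) = 0 ->
  DXf p1 e1 p2 e2 cw sw c1 s1 c2 s2 * (e2*s2*(c2*cw - s2*sw) - (1+e2*c2)*(c2*sw + s2*cw))
  + DYf p1 e1 p2 e2 cw sw c1 s1 c2 s2 * (e2*s2*(c2*sw + s2*cw) + (1+e2*c2)*(c2*cw - s2*sw)) = 0 ->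
  (DXf p1 e1 p2 e2 cw sw c1 s1 c2 s2 <> 0 \/ DYf p1 e1 p2 e2 cw sw c1 s1 c2 s2 <> 0) ->
  exists c s l1 l2, c^2 + s^2 = 1 /\ c1 = l1*c - e1 /\ s1 = l1*s /\
    c2 = l2*(c*cw+s*sw) - e2 /\ s2 = l2*(s*cw-c*sw) /\
    - DXf p1 e1 p2 e2 cw sw c1 s1 c2 s2 * s + DYf p1 e1 p2 e2 cw sw c1 s1 c2 s2 * c = 0.
Proof.
intros He1 He2 Hw H1 H2 Eq1 Eq2 HD.
set (Dx := DXf p1 e1 p2 e2 cw sw c1 s1 c2 s2) in *.
set (Dy := DYf p1 e1 p2 e2 cw sw c1 s1 c2 s2) in *.
set (N := (e1+c1)^2 + s1^2).
assert (Hc1 : -1 <= c1) by nra.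
assert (HNe : N = e1^2 + 2*e1*c1 + 1).
{ unfold N. replace ((e1 + c1) ^ 2 + s1 ^ 2) with (e1^2 + 2*e1*c1 + (c1^2 + s1^2)) by ring. rewrite H1. ring. }
assert (HN : 0 < N).
{ rewrite HNe. assert (0 <= e1*(c1+1)) by (apply Rmult_le_pos; lra). nra. }
set (nu := sqrt N).
assert (Hnu : 0 < nu) by (apply sqrt_lt_R0; exact HN).
assert (Hnu2 : nu * nu = N) by (apply sqrt_sqrt; lra).
set (c := (e1+c1)/nu). set (s := s1/nu).
set (N2x := c2*cw - s2*sw + e2*cw). set (N2y := c2*sw + s2*cw + e2*sw).
assert (Eq2' : - Dx * N2y + Dy * N2x = 0).
{ assert (Hx : e2*s2*(c2*cw - s2*sw) - (1+e2*c2)*(c2*sw + s2*cw) = - N2y + e2*sw*(1 - (c2^2+s2^2)))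
    by (unfold N2y; ring).
  assert (Hy : e2*s2*(c2*sw + s2*cw) + (1+e2*c2)*(c2*cw - s2*sw) = N2x - e2*cw*(1 - (c2^2+s2^2)))
    by (unfold N2x; ring).
  rewrite Hx, Hy, H2 in Eq2. lra. }
set (cross := (e1+c1)*N2y - s1*N2x).
assert (Hcr : cross = 0).
{ assert (Ha : Dx * cross = N2x * (Dx * (- s1) + Dy * (e1 + c1)) - (e1+c1) * (- Dx * N2y + Dy * N2x))
   by (unfold cross; ring).
  assert (Hb : Dy * cross = N2y * (Dx * (- s1) + Dy * (e1 + c1)) - s1 * (- Dx * N2y + Dy * N2x))
   by (unfold cross; ring).
  rewrite Eq1, Eq2' in Ha, Hb. ring_simplify in Ha. ring_simplify in Hb.
  destruct HD as [HD|HD].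
  - apply Rmult_integral in Ha; destruct Ha; [contradiction|lra].
  - apply Rmult_integral in Hb; destruct Hb; [contradiction|lra]. }
set (l2 := N2x*c + N2y*s).
assert (Hcs : c^2 + s^2 = 1).
{ unfold c, s. replace (((e1 + c1) / nu) ^ 2 + (s1 / nu) ^ 2) with (N / (nu*nu)) by (unfold N; field; lra).
  rewrite Hnu2. field. lra. }
assert (Hsc : N2x * s - N2y * c = 0).
{ unfold c, s. replace (N2x * (s1 / nu) - N2y * ((e1 + c1) / nu)) with (- cross / nu) by (unfold cross; field; lra).
  rewrite Hcr. field. lra. }
assert (HNx : N2x = l2 * c).
{ unfold l2. assert (Hx : N2x - (N2x * c + N2y * s) * c = N2x * (1 - (c^2+s^2)) + s * (N2x * s - N2y * c)) by ring.
  rewrite Hcs, Hsc in Hx. lra. }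
assert (HNy : N2y = l2 * s).
{ unfold l2. assert (Hx : N2y - (N2x * c + N2y * s) * s = N2y * (1 - (c^2+s^2)) - c * (N2x * s - N2y * c)) by ring.
  rewrite Hcs, Hsc in Hx. lra. }
exists c, s, nu, l2. split; [exact Hcs|]. split.
{ unfold c. field. lra. }
split. { unfold s. field. lra. }
split.
{ assert (Hx : N2x * cw + N2y * sw = (c2 + e2) * (cw^2 + sw^2)) by (unfold N2x, N2y; ring).
  rewrite Hw, HNx, HNy in Hx. lra. }
split.
{ assert (Hx : N2y * cw - N2x * sw = s2 * (cw^2 + sw^2)) by (unfold N2x, N2y; ring).
  rewrite Hw, HNx, HNy in Hx. lra. }
{ assert (Hx : Dx * (- s1) + Dy * (e1 + c1) = nu * (- Dx * s + Dy * c)) by (unfold c, s; field; lra).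
  rewrite Eq1 in Hx. symmetry in Hx. apply Rmult_integral in Hx. destruct Hx; [lra|auto]. }
Qed.

Definition gc (A B e1 e2 cw sw : R) (k : nat) : R :=
  match k with
  | 0%nat => (B^4*cw^4 - 2*B^4*e2^2*cw^4*sw^2 - 2*B^4*e2^2*cw^6 + B^4*e2^4*cw^4*sw^4 + 2*B^4*e2^4*cw^6*sw^2 + B^4*e2^4*cw^8 - 2*B^4*e1^2*cw^4 + 4*B^4*e1^2*e2^2*cw^4*sw^2 + 4*B^4*e1^2*e2^2*cw^6 - 2*B^4*e1^2*e2^4*cw^4*sw^4 - 4*B^4*e1^2*e2^4*cw^6*sw^2 - 2*B^4*e1^2*e2^4*cw^8 + B^4*e1^4*cw^4 - 2*B^4*e1^4*e2^2*cw^4*sw^2 - 2*B^4*e1^4*e2^2*cw^6 + B^4*e1^4*e2^4*cw^4*sw^4 + 2*B^4*e1^4*e2^4*cw^6*sw^2 + B^4*e1^4*e2^4*cw^8 - 4*A*B^3*cw^3 + 4*A*B^3*e2^2*cw^3*sw^2 + 8*A*B^3*e2^2*cw^5 - 4*A*B^3*e2^4*cw^5*sw^2 - 4*A*B^3*e2^4*cw^7 + 8*A*B^3*e1^2*cw^3 - 8*A*B^3*e1^2*e2^2*cw^3*sw^2 - 16*A*B^3*e1^2*e2^2*cw^5 + 8*A*B^3*e1^2*e2^4*cw^5*sw^2 + 8*A*B^3*e1^2*e2^4*cw^7 - 4*A*B^3*e1^4*cw^3 + 4*A*B^3*e1^4*e2^2*cw^3*sw^2 + 8*A*B^3*e1^4*e2^2*cw^5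 - 4*A*B^3*e1^4*e2^4*cw^5*sw^2 - 4*A*B^3*e1^4*e2^4*cw^7 + 6*A^2*B^2*cw^2 - 2*A^2*B^2*e2^2*cw^2*sw^2 - 12*A^2*B^2*e2^2*cw^4 + 2*A^2*B^2*e2^4*cw^4*sw^2 + 6*A^2*B^2*e2^4*cw^6 - 12*A^2*B^2*e1^2*cw^2 + 4*A^2*B^2*e1^2*e2^2*cw^2*sw^2 + 24*A^2*B^2*e1^2*e2^2*cw^4 - 4*A^2*B^2*e1^2*e2^4*cw^4*sw^2 - 12*A^2*B^2*e1^2*e2^4*cw^6 + 6*A^2*B^2*e1^4*cw^2 - 2*A^2*B^2*e1^4*e2^2*cw^2*sw^2 - 12*A^2*B^2*e1^4*e2^2*cw^4 + 2*A^2*B^2*e1^4*e2^4*cw^4*sw^2 + 6*A^2*B^2*e1^4*e2^4*cw^6 - 4*A^3*B*cw + 8*A^3*B*e2^2*cw^3 - 4*A^3*B*e2^4*cw^5 + 8*A^3*B*e1^2*cw - 16*A^3*B*e1^2*e2^2*cw^3 + 8*A^3*B*e1^2*e2^4*cw^5 - 4*A^3*B*e1^4*cw + 8*A^3*B*e1^4*e2^2*cw^3 - 4*A^3*B*e1^4*e2^4*cw^5 + A^4 - 2*A^4*e2^2*cw^2 + A^4*e2^4*cw^4 - 2*A^4*e1^2 + 4*A^4*e1^2*e2^2*cw^2 - 2*A^4*e1^2*e2^4*cw^4 + A^4*e1^4 - 2*A^4*e1^4*e2^2*cw^2 + A^4*e1^4*e2^4*cw^4)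
  | 1%nat => (-4*B^4*cw^3*sw + 8*B^4*e2^2*cw^3*sw^3 + 8*B^4*e2^2*cw^5*sw - 4*B^4*e2^4*cw^3*sw^5 - 8*B^4*e2^4*cw^5*sw^3 - 4*B^4*e2^4*cw^7*sw + 8*B^4*e1^2*cw^3*sw - 16*B^4*e1^2*e2^2*cw^3*sw^3 - 16*B^4*e1^2*e2^2*cw^5*sw + 8*B^4*e1^2*e2^4*cw^3*sw^5 + 16*B^4*e1^2*e2^4*cw^5*sw^3 + 8*B^4*e1^2*e2^4*cw^7*sw - 4*B^4*e1^4*cw^3*sw + 8*B^4*e1^4*e2^2*cw^3*sw^3 + 8*B^4*e1^4*e2^2*cw^5*sw - 4*B^4*e1^4*e2^4*cw^3*sw^5 - 8*B^4*e1^4*e2^4*cw^5*sw^3 - 4*B^4*e1^4*e2^4*cw^7*sw + 12*A*B^3*cw^2*sw - 12*A*B^3*e2^2*cw^2*sw^3 - 32*A*B^3*e2^2*cw^4*sw + 20*A*B^3*e2^4*cw^4*sw^3 + 20*A*B^3*e2^4*cw^6*sw - 24*A*B^3*e1^2*cw^2*sw + 24*A*B^3*e1^2*e2^2*cw^2*sw^3 + 64*A*B^3*e1^2*e2^2*cw^4*sw - 40*A*B^3*e1^2*e2^4*cw^4*sw^3 - 40*A*B^3*e1^2*e2^4*cw^6*sw + 12*A*B^3*e1^4*cw^2*sw - 12*A*B^3*e1^4*e2^2*cw^2*sw^3 - 32*A*B^3*e1^4*e2^2*cw^4*sw + 20*A*B^3*e1^4*e2^4*cw^4*sw^3 + 20*A*B^3*e1^4*e2^4*cw^6*sw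 - 12*A^2*B^2*cw*sw + 4*A^2*B^2*e2^2*cw*sw^3 + 44*A^2*B^2*e2^2*cw^3*sw - 8*A^2*B^2*e2^4*cw^3*sw^3 - 32*A^2*B^2*e2^4*cw^5*sw + 24*A^2*B^2*e1^2*cw*sw - 8*A^2*B^2*e1^2*e2^2*cw*sw^3 - 88*A^2*B^2*e1^2*e2^2*cw^3*sw + 16*A^2*B^2*e1^2*e2^4*cw^3*sw^3 + 64*A^2*B^2*e1^2*e2^4*cw^5*sw - 12*A^2*B^2*e1^4*cw*sw + 4*A^2*B^2*e1^4*e2^2*cw*sw^3 + 44*A^2*B^2*e1^4*e2^2*cw^3*sw - 8*A^2*B^2*e1^4*e2^4*cw^3*sw^3 - 32*A^2*B^2*e1^4*e2^4*cw^5*sw + 4*A^3*B*sw - 24*A^3*B*e2^2*cw^2*sw + 20*A^3*B*e2^4*cw^4*sw - 8*A^3*B*e1^2*sw + 48*A^3*B*e1^2*e2^2*cw^2*sw - 40*A^3*B*e1^2*e2^4*cw^4*sw + 4*A^3*B*e1^4*sw - 24*A^3*B*e1^4*e2^2*cw^2*sw + 20*A^3*B*e1^4*e2^4*cw^4*sw + 4*A^4*e2^2*cw*sw - 4*A^4*e2^4*cw^3*sw - 8*A^4*e1^2*e2^2*cw*sw + 8*A^4*e1^2*e2^4*cw^3*sw + 4*A^4*e1^4*e2^2*cw*sw - 4*A^4*e1^4*e2^4*cw^3*sw)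
  | 2%nat => (6*B^4*cw^2*sw^2 + 3*B^4*cw^4 - 12*B^4*e2^2*cw^2*sw^4 - 18*B^4*e2^2*cw^4*sw^2 - 6*B^4*e2^2*cw^6 + 6*B^4*e2^4*cw^2*sw^6 + 15*B^4*e2^4*cw^4*sw^4 + 12*B^4*e2^4*cw^6*sw^2 + 3*B^4*e2^4*cw^8 - 12*B^4*e1^2*cw^2*sw^2 - 4*B^4*e1^2*cw^4 + 24*B^4*e1^2*e2^2*cw^2*sw^4 + 32*B^4*e1^2*e2^2*cw^4*sw^2 + 8*B^4*e1^2*e2^2*cw^6 - 12*B^4*e1^2*e2^4*cw^2*sw^6 - 28*B^4*e1^2*e2^4*cw^4*sw^4 - 20*B^4*e1^2*e2^4*cw^6*sw^2 - 4*B^4*e1^2*e2^4*cw^8 + 6*B^4*e1^4*cw^2*sw^2 + B^4*e1^4*cw^4 - 12*B^4*e1^4*e2^2*cw^2*sw^4 - 14*B^4*e1^4*e2^2*cw^4*sw^2 - 2*B^4*e1^4*e2^2*cw^6 + 6*B^4*e1^4*e2^4*cw^2*sw^6 + 13*B^4*e1^4*e2^4*cw^4*sw^4 + 8*B^4*e1^4*e2^4*cw^6*sw^2 + B^4*e1^4*e2^4*cw^8 - 12*A*B^3*cw*sw^2 - 12*A*B^3*cw^3 + 12*A*B^3*e2^2*cw*sw^4 + 64*A*B^3*e2^2*cw^3*sw^2 + 20*A*B^3*e2^2*cw^5 - 40*A*B^3*e2^4*cw^3*sw^4 - 48*A*B^3*e2^4*cw^5*sw^2 - 8*A*B^3*e2^4*cw^7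 + 24*A*B^3*e1^2*cw*sw^2 + 16*A*B^3*e1^2*cw^3 - 24*A*B^3*e1^2*e2^2*cw*sw^4 - 120*A*B^3*e1^2*e2^2*cw^3*sw^2 - 24*A*B^3*e1^2*e2^2*cw^5 + 80*A*B^3*e1^2*e2^4*cw^3*sw^4 + 88*A*B^3*e1^2*e2^4*cw^5*sw^2 + 8*A*B^3*e1^2*e2^4*cw^7 - 12*A*B^3*e1^4*cw*sw^2 - 4*A*B^3*e1^4*cw^3 + 12*A*B^3*e1^4*e2^2*cw*sw^4 + 56*A*B^3*e1^4*e2^2*cw^3*sw^2 + 4*A*B^3*e1^4*e2^2*cw^5 - 40*A*B^3*e1^4*e2^4*cw^3*sw^4 - 40*A*B^3*e1^4*e2^4*cw^5*sw^2 + 6*A^2*B^2*sw^2 + 18*A^2*B^2*cw^2 - 2*A^2*B^2*e2^2*sw^4 - 68*A^2*B^2*e2^2*cw^2*sw^2 - 26*A^2*B^2*e2^2*cw^4 + 12*A^2*B^2*e2^4*cw^2*sw^4 + 76*A^2*B^2*e2^4*cw^4*sw^2 + 8*A^2*B^2*e2^4*cw^6 - 12*A^2*B^2*e1^2*sw^2 - 26*A^2*B^2*e1^2*cw^2 + 4*A^2*B^2*e1^2*e2^2*sw^4 + 130*A^2*B^2*e1^2*e2^2*cw^2*sw^2 + 32*A^2*B^2*e1^2*e2^2*cw^4 - 24*A^2*B^2*e1^2*e2^4*cw^2*sw^4 - 146*A^2*B^2*e1^2*e2^4*cw^4*sw^2 - 6*A^2*B^2*e1^2*e2^4*cw^6 +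 6*A^2*B^2*e1^4*sw^2 + 8*A^2*B^2*e1^4*cw^2 - 2*A^2*B^2*e1^4*e2^2*sw^4 - 62*A^2*B^2*e1^4*e2^2*cw^2*sw^2 - 6*A^2*B^2*e1^4*e2^2*cw^4 + 12*A^2*B^2*e1^4*e2^4*cw^2*sw^4 + 70*A^2*B^2*e1^4*e2^4*cw^4*sw^2 - 2*A^2*B^2*e1^4*e2^4*cw^6 - 12*A^3*B*cw + 24*A^3*B*e2^2*cw*sw^2 + 16*A^3*B*e2^2*cw^3 - 40*A^3*B*e2^4*cw^3*sw^2 - 4*A^3*B*e2^4*cw^5 + 20*A^3*B*e1^2*cw - 48*A^3*B*e1^2*e2^2*cw*sw^2 - 24*A^3*B*e1^2*e2^2*cw^3 + 80*A^3*B*e1^2*e2^4*cw^3*sw^2 + 4*A^3*B*e1^2*e2^4*cw^5 - 8*A^3*B*e1^4*cw + 24*A^3*B*e1^4*e2^2*cw*sw^2 + 8*A^3*B*e1^4*e2^2*cw^3 - 40*A^3*B*e1^4*e2^4*cw^3*sw^2 + 3*A^4 - 2*A^4*e2^2*sw^2 - 4*A^4*e2^2*cw^2 + 6*A^4*e2^4*cw^2*sw^2 + A^4*e2^4*cw^4 - 6*A^4*e1^2 + 4*A^4*e1^2*e2^2*sw^2 + 8*A^4*e1^2*e2^2*cw^2 - 12*A^4*e1^2*e2^4*cw^2*sw^2 - 2*A^4*e1^2*e2^4*cw^4 + 3*A^4*e1^4 - 2*A^4*e1^4*e2^2*sw^2 - 4*A^4*e1^4*e2^2*cw^2 + 6*A^4*e1^4*e2^4*cw^2*sw^2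 + A^4*e1^4*e2^4*cw^4)
  | 3%nat => (-4*B^4*cw*sw^3 - 12*B^4*cw^3*sw + 8*B^4*e2^2*cw*sw^5 + 32*B^4*e2^2*cw^3*sw^3 + 24*B^4*e2^2*cw^5*sw - 4*B^4*e2^4*cw*sw^7 - 20*B^4*e2^4*cw^3*sw^5 - 28*B^4*e2^4*cw^5*sw^3 - 12*B^4*e2^4*cw^7*sw + 8*B^4*e1^2*cw*sw^3 + 16*B^4*e1^2*cw^3*sw - 16*B^4*e1^2*e2^2*cw*sw^5 - 48*B^4*e1^2*e2^2*cw^3*sw^3 - 32*B^4*e1^2*e2^2*cw^5*sw + 8*B^4*e1^2*e2^4*cw*sw^7 + 32*B^4*e1^2*e2^4*cw^3*sw^5 + 40*B^4*e1^2*e2^4*cw^5*sw^3 + 16*B^4*e1^2*e2^4*cw^7*sw - 4*B^4*e1^4*cw*sw^3 - 4*B^4*e1^4*cw^3*sw + 8*B^4*e1^4*e2^2*cw*sw^5 + 16*B^4*e1^4*e2^2*cw^3*sw^3 + 8*B^4*e1^4*e2^2*cw^5*sw - 4*B^4*e1^4*e2^4*cw*sw^7 - 12*B^4*e1^4*e2^4*cw^3*sw^5 - 12*B^4*e1^4*e2^4*cw^5*sw^3 - 4*B^4*e1^4*e2^4*cw^7*sw + 4*A*B^3*sw^3 + 36*A*B^3*cw^2*sw - 4*A*B^3*e2^2*sw^5 - 80*A*B^3*e2^2*cw^2*sw^3 - 76*A*B^3*e2^2*cw^4*sw + 40*A*B^3*e2^4*cw^2*sw^5 + 80*A*B^3*e2^4*cw^4*sw^3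 + 40*A*B^3*e2^4*cw^6*sw - 8*A*B^3*e1^2*sw^3 - 48*A*B^3*e1^2*cw^2*sw + 8*A*B^3*e1^2*e2^2*sw^5 + 136*A*B^3*e1^2*e2^2*cw^2*sw^3 + 88*A*B^3*e1^2*e2^2*cw^4*sw - 80*A*B^3*e1^2*e2^4*cw^2*sw^5 - 120*A*B^3*e1^2*e2^4*cw^4*sw^3 - 40*A*B^3*e1^2*e2^4*cw^6*sw + 4*A*B^3*e1^4*sw^3 + 12*A*B^3*e1^4*cw^2*sw - 4*A*B^3*e1^4*e2^2*sw^5 - 56*A*B^3*e1^4*e2^2*cw^2*sw^3 - 12*A*B^3*e1^4*e2^2*cw^4*sw + 40*A*B^3*e1^4*e2^4*cw^2*sw^5 + 40*A*B^3*e1^4*e2^4*cw^4*sw^3 - 36*A^2*B^2*cw*sw + 52*A^2*B^2*e2^2*cw*sw^3 + 92*A^2*B^2*e2^2*cw^3*sw - 8*A^2*B^2*e2^4*cw*sw^5 - 104*A^2*B^2*e2^4*cw^3*sw^3 - 40*A^2*B^2*e2^4*cw^5*sw + 52*A^2*B^2*e1^2*cw*sw - 92*A^2*B^2*e1^2*e2^2*cw*sw^3 - 116*A^2*B^2*e1^2*e2^2*cw^3*sw + 16*A^2*B^2*e1^2*e2^4*cw*sw^5 + 184*A^2*B^2*e1^2*e2^4*cw^3*sw^3 + 32*A^2*B^2*e1^2*e2^4*cw^5*sw - 16*A^2*B^2*e1^4*cw*sw + 40*A^2*B^2*e1^4*e2^2*cw*sw^3 + 24*A^2*B^2*e1^4*e2^2*cw^3*sw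 - 8*A^2*B^2*e1^4*e2^4*cw*sw^5 - 80*A^2*B^2*e1^4*e2^4*cw^3*sw^3 + 8*A^2*B^2*e1^4*e2^4*cw^5*sw + 12*A^3*B*sw - 8*A^3*B*e2^2*sw^3 - 48*A^3*B*e2^2*cw^2*sw + 40*A^3*B*e2^4*cw^2*sw^3 + 20*A^3*B*e2^4*cw^4*sw - 20*A^3*B*e1^2*sw + 16*A^3*B*e1^2*e2^2*sw^3 + 72*A^3*B*e1^2*e2^2*cw^2*sw - 80*A^3*B*e1^2*e2^4*cw^2*sw^3 - 20*A^3*B*e1^2*e2^4*cw^4*sw + 8*A^3*B*e1^4*sw - 8*A^3*B*e1^4*e2^2*sw^3 - 24*A^3*B*e1^4*e2^2*cw^2*sw + 40*A^3*B*e1^4*e2^4*cw^2*sw^3 + 8*A^4*e2^2*cw*sw - 4*A^4*e2^4*cw*sw^3 - 4*A^4*e2^4*cw^3*sw - 16*A^4*e1^2*e2^2*cw*sw + 8*A^4*e1^2*e2^4*cw*sw^3 + 8*A^4*e1^2*e2^4*cw^3*sw + 8*A^4*e1^4*e2^2*cw*sw - 4*A^4*e1^4*e2^4*cw*sw^3 - 4*A^4*e1^4*e2^4*cw^3*sw)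
  | 4%nat => (B^4*sw^4 + 18*B^4*cw^2*sw^2 + 3*B^4*cw^4 - 2*B^4*e2^2*sw^6 - 38*B^4*e2^2*cw^2*sw^4 - 42*B^4*e2^2*cw^4*sw^2 - 6*B^4*e2^2*cw^6 + B^4*e2^4*sw^8 + 20*B^4*e2^4*cw^2*sw^6 + 40*B^4*e2^4*cw^4*sw^4 + 24*B^4*e2^4*cw^6*sw^2 + 3*B^4*e2^4*cw^8 - 2*B^4*e1^2*sw^4 - 24*B^4*e1^2*cw^2*sw^2 - 2*B^4*e1^2*cw^4 + 4*B^4*e1^2*e2^2*sw^6 + 52*B^4*e1^2*e2^2*cw^2*sw^4 + 52*B^4*e1^2*e2^2*cw^4*sw^2 + 4*B^4*e1^2*e2^2*cw^6 - 2*B^4*e1^2*e2^4*sw^8 - 28*B^4*e1^2*e2^4*cw^2*sw^6 - 52*B^4*e1^2*e2^4*cw^4*sw^4 - 28*B^4*e1^2*e2^4*cw^6*sw^2 - 2*B^4*e1^2*e2^4*cw^8 + B^4*e1^4*sw^4 + 6*B^4*e1^4*cw^2*sw^2 - 2*B^4*e1^4*e2^2*sw^6 - 14*B^4*e1^4*e2^2*cw^2*sw^4 - 12*B^4*e1^4*e2^2*cw^4*sw^2 + B^4*e1^4*e2^4*sw^8 + 8*B^4*e1^4*e2^4*cw^2*sw^6 + 13*B^4*e1^4*e2^4*cw^4*sw^4 + 6*B^4*e1^4*e2^4*cw^6*sw^2 - 36*A*B^3*cw*sw^2 - 12*A*B^3*cw^3 + 56*A*B^3*e2^2*cw*sw^4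 + 128*A*B^3*e2^2*cw^3*sw^2 + 16*A*B^3*e2^2*cw^5 - 20*A*B^3*e2^4*cw*sw^6 - 100*A*B^3*e2^4*cw^3*sw^4 - 84*A*B^3*e2^4*cw^5*sw^2 - 4*A*B^3*e2^4*cw^7 + 48*A*B^3*e1^2*cw*sw^2 + 8*A*B^3*e1^2*cw^3 - 88*A*B^3*e1^2*e2^2*cw*sw^4 - 136*A*B^3*e1^2*e2^2*cw^3*sw^2 - 8*A*B^3*e1^2*e2^2*cw^5 + 40*A*B^3*e1^2*e2^4*cw*sw^6 + 120*A*B^3*e1^2*e2^4*cw^3*sw^4 + 80*A*B^3*e1^2*e2^4*cw^5*sw^2 - 12*A*B^3*e1^4*cw*sw^2 + 32*A*B^3*e1^4*e2^2*cw*sw^4 + 12*A*B^3*e1^4*e2^2*cw^3*sw^2 - 20*A*B^3*e1^4*e2^4*cw*sw^6 - 20*A*B^3*e1^4*e2^4*cw^3*sw^4 + 18*A^2*B^2*sw^2 + 18*A^2*B^2*cw^2 - 16*A^2*B^2*e2^2*sw^4 - 132*A^2*B^2*e2^2*cw^2*sw^2 - 16*A^2*B^2*e2^2*cw^4 + 2*A^2*B^2*e2^4*sw^6 + 86*A^2*B^2*e2^4*cw^2*sw^4 + 86*A^2*B^2*e2^4*cw^4*sw^2 + 2*A^2*B^2*e2^4*cw^6 - 26*A^2*B^2*e1^2*sw^2 - 16*A^2*B^2*e1^2*cw^2 + 26*A^2*B^2*e1^2*e2^2*sw^4 + 162*A^2*B^2*e1^2*e2^2*cw^2*sw^2 + 6*A^2*B^2*e1^2*e2^2*cw^4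 - 4*A^2*B^2*e1^2*e2^4*sw^6 - 136*A^2*B^2*e1^2*e2^4*cw^2*sw^4 - 70*A^2*B^2*e1^2*e2^4*cw^4*sw^2 + 2*A^2*B^2*e1^2*e2^4*cw^6 + 8*A^2*B^2*e1^4*sw^2 + 2*A^2*B^2*e1^4*cw^2 - 10*A^2*B^2*e1^4*e2^2*sw^4 - 34*A^2*B^2*e1^4*e2^2*cw^2*sw^2 + 2*A^2*B^2*e1^4*e2^2*cw^4 + 2*A^2*B^2*e1^4*e2^4*sw^6 + 50*A^2*B^2*e1^4*e2^4*cw^2*sw^4 - 12*A^2*B^2*e1^4*e2^4*cw^4*sw^2 - 12*A^3*B*cw + 48*A^3*B*e2^2*cw*sw^2 + 8*A^3*B*e2^2*cw^3 - 20*A^3*B*e2^4*cw*sw^4 - 40*A^3*B*e2^4*cw^3*sw^2 + 16*A^3*B*e1^2*cw - 72*A^3*B*e1^2*e2^2*cw*sw^2 - 8*A^3*B*e1^2*e2^2*cw^3 + 40*A^3*B*e1^2*e2^4*cw*sw^4 + 40*A^3*B*e1^2*e2^4*cw^3*sw^2 - 4*A^3*B*e1^4*cw + 24*A^3*B*e1^4*e2^2*cw*sw^2 - 20*A^3*B*e1^4*e2^4*cw*sw^4 + 3*A^4 - 4*A^4*e2^2*sw^2 - 2*A^4*e2^2*cw^2 + A^4*e2^4*sw^4 + 6*A^4*e2^4*cw^2*sw^2 - 6*A^4*e1^2 + 8*A^4*e1^2*e2^2*sw^2 + 4*A^4*e1^2*e2^2*cw^2 - 2*A^4*e1^2*e2^4*sw^4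 - 12*A^4*e1^2*e2^4*cw^2*sw^2 + 3*A^4*e1^4 - 4*A^4*e1^4*e2^2*sw^2 - 2*A^4*e1^4*e2^2*cw^2 + A^4*e1^4*e2^4*sw^4 + 6*A^4*e1^4*e2^4*cw^2*sw^2)
  | 5%nat => (-12*B^4*cw*sw^3 - 12*B^4*cw^3*sw + 24*B^4*e2^2*cw*sw^5 + 48*B^4*e2^2*cw^3*sw^3 + 24*B^4*e2^2*cw^5*sw - 12*B^4*e2^4*cw*sw^7 - 36*B^4*e2^4*cw^3*sw^5 - 36*B^4*e2^4*cw^5*sw^3 - 12*B^4*e2^4*cw^7*sw + 16*B^4*e1^2*cw*sw^3 + 8*B^4*e1^2*cw^3*sw - 32*B^4*e1^2*e2^2*cw*sw^5 - 48*B^4*e1^2*e2^2*cw^3*sw^3 - 16*B^4*e1^2*e2^2*cw^5*sw + 16*B^4*e1^2*e2^4*cw*sw^7 + 40*B^4*e1^2*e2^4*cw^3*sw^5 + 32*B^4*e1^2*e2^4*cw^5*sw^3 + 8*B^4*e1^2*e2^4*cw^7*sw - 4*B^4*e1^4*cw*sw^3 + 8*B^4*e1^4*e2^2*cw*sw^5 + 8*B^4*e1^4*e2^2*cw^3*sw^3 - 4*B^4*e1^4*e2^4*cw*sw^7 - 8*B^4*e1^4*e2^4*cw^3*sw^5 - 4*B^4*e1^4*e2^4*cw^5*sw^3 + 12*A*B^3*sw^3 + 36*A*B^3*cw^2*sw - 16*A*B^3*e2^2*sw^5 - 128*A*B^3*e2^2*cw^2*sw^3 - 56*A*B^3*e2^2*cw^4*sw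 + 4*A*B^3*e2^4*sw^7 + 84*A*B^3*e2^4*cw^2*sw^5 + 100*A*B^3*e2^4*cw^4*sw^3 + 20*A*B^3*e2^4*cw^6*sw - 16*A*B^3*e1^2*sw^3 - 24*A*B^3*e1^2*cw^2*sw + 24*A*B^3*e1^2*e2^2*sw^5 + 120*A*B^3*e1^2*e2^2*cw^2*sw^3 + 24*A*B^3*e1^2*e2^2*cw^4*sw - 8*A*B^3*e1^2*e2^4*sw^7 - 88*A*B^3*e1^2*e2^4*cw^2*sw^5 - 80*A*B^3*e1^2*e2^4*cw^4*sw^3 + 4*A*B^3*e1^4*sw^3 - 8*A*B^3*e1^4*e2^2*sw^5 - 4*A*B^3*e1^4*e2^2*cw^2*sw^3 + 4*A*B^3*e1^4*e2^4*sw^7 + 4*A*B^3*e1^4*e2^4*cw^2*sw^5 - 36*A^2*B^2*cw*sw + 92*A^2*B^2*e2^2*cw*sw^3 + 52*A^2*B^2*e2^2*cw^3*sw - 40*A^2*B^2*e2^4*cw*sw^5 - 104*A^2*B^2*e2^4*cw^3*sw^3 - 8*A^2*B^2*e2^4*cw^5*sw + 32*A^2*B^2*e1^2*cw*sw - 104*A^2*B^2*e1^2*e2^2*cw*sw^3 - 24*A^2*B^2*e1^2*e2^2*cw^3*sw + 56*A^2*B^2*e1^2*e2^4*cw*sw^5 + 80*A^2*B^2*e1^2*e2^4*cw^3*sw^3 - 8*A^2*B^2*e1^2*e2^4*cw^5*sw - 4*A^2*B^2*e1^4*cw*sw + 20*A^2*B^2*e1^4*e2^2*cw*sw^3 - 4*A^2*B^2*e1^4*e2^2*cw^3*sw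 - 16*A^2*B^2*e1^4*e2^4*cw*sw^5 + 8*A^2*B^2*e1^4*e2^4*cw^3*sw^3 + 12*A^3*B*sw - 16*A^3*B*e2^2*sw^3 - 24*A^3*B*e2^2*cw^2*sw + 4*A^3*B*e2^4*sw^5 + 40*A^3*B*e2^4*cw^2*sw^3 - 16*A^3*B*e1^2*sw + 24*A^3*B*e1^2*e2^2*sw^3 + 24*A^3*B*e1^2*e2^2*cw^2*sw - 8*A^3*B*e1^2*e2^4*sw^5 - 40*A^3*B*e1^2*e2^4*cw^2*sw^3 + 4*A^3*B*e1^4*sw - 8*A^3*B*e1^4*e2^2*sw^3 + 4*A^3*B*e1^4*e2^4*sw^5 + 4*A^4*e2^2*cw*sw - 4*A^4*e2^4*cw*sw^3 - 8*A^4*e1^2*e2^2*cw*sw + 8*A^4*e1^2*e2^4*cw*sw^3 + 4*A^4*e1^4*e2^2*cw*sw - 4*A^4*e1^4*e2^4*cw*sw^3)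
  | 6%nat => (3*B^4*sw^4 + 18*B^4*cw^2*sw^2 + B^4*cw^4 - 6*B^4*e2^2*sw^6 - 42*B^4*e2^2*cw^2*sw^4 - 38*B^4*e2^2*cw^4*sw^2 - 2*B^4*e2^2*cw^6 + 3*B^4*e2^4*sw^8 + 24*B^4*e2^4*cw^2*sw^6 + 40*B^4*e2^4*cw^4*sw^4 + 20*B^4*e2^4*cw^6*sw^2 + B^4*e2^4*cw^8 - 4*B^4*e1^2*sw^4 - 12*B^4*e1^2*cw^2*sw^2 + 8*B^4*e1^2*e2^2*sw^6 + 32*B^4*e1^2*e2^2*cw^2*sw^4 + 24*B^4*e1^2*e2^2*cw^4*sw^2 - 4*B^4*e1^2*e2^4*sw^8 - 20*B^4*e1^2*e2^4*cw^2*sw^6 - 28*B^4*e1^2*e2^4*cw^4*sw^4 - 12*B^4*e1^2*e2^4*cw^6*sw^2 + B^4*e1^4*sw^4 - 2*B^4*e1^4*e2^2*sw^6 - 2*B^4*e1^4*e2^2*cw^2*sw^4 + B^4*e1^4*e2^4*sw^8 + 2*B^4*e1^4*e2^4*cw^2*sw^6 + B^4*e1^4*e2^4*cw^4*sw^4 - 36*A*B^3*cw*sw^2 - 4*A*B^3*cw^3 + 76*A*B^3*e2^2*cw*sw^4 + 80*A*B^3*e2^2*cw^3*sw^2 + 4*A*B^3*e2^2*cw^5 - 40*A*B^3*e2^4*cw*sw^6 - 80*A*B^3*e2^4*cw^3*sw^4 - 40*A*B^3*e2^4*cw^5*sw^2 + 24*A*B^3*e1^2*cw*sw^2 - 64*A*B^3*e1^2*e2^2*cw*sw^4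 - 24*A*B^3*e1^2*e2^2*cw^3*sw^2 + 40*A*B^3*e1^2*e2^4*cw*sw^6 + 40*A*B^3*e1^2*e2^4*cw^3*sw^4 + 18*A^2*B^2*sw^2 + 6*A^2*B^2*cw^2 - 26*A^2*B^2*e2^2*sw^4 - 68*A^2*B^2*e2^2*cw^2*sw^2 - 2*A^2*B^2*e2^2*cw^4 + 8*A^2*B^2*e2^4*sw^6 + 76*A^2*B^2*e2^4*cw^2*sw^4 + 12*A^2*B^2*e2^4*cw^4*sw^2 - 16*A^2*B^2*e1^2*sw^2 - 2*A^2*B^2*e1^2*cw^2 + 26*A^2*B^2*e1^2*e2^2*sw^4 + 34*A^2*B^2*e1^2*e2^2*cw^2*sw^2 - 2*A^2*B^2*e1^2*e2^2*cw^4 - 10*A^2*B^2*e1^2*e2^4*sw^6 - 50*A^2*B^2*e1^2*e2^4*cw^2*sw^4 + 12*A^2*B^2*e1^2*e2^4*cw^4*sw^2 + 2*A^2*B^2*e1^4*sw^2 - 4*A^2*B^2*e1^4*e2^2*sw^4 + 2*A^2*B^2*e1^4*e2^2*cw^2*sw^2 + 2*A^2*B^2*e1^4*e2^4*sw^6 - 2*A^2*B^2*e1^4*e2^4*cw^2*sw^4 - 4*A^3*B*cw + 24*A^3*B*e2^2*cw*sw^2 - 20*A^3*B*e2^4*cw*sw^4 + 4*A^3*B*e1^2*cw - 24*A^3*B*e1^2*e2^2*cw*sw^2 + 20*A^3*B*e1^2*e2^4*cw*sw^4 + A^4 - 2*A^4*e2^2*sw^2 + A^4*e2^4*sw^4 -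 2*A^4*e1^2 + 4*A^4*e1^2*e2^2*sw^2 - 2*A^4*e1^2*e2^4*sw^4 + A^4*e1^4 - 2*A^4*e1^4*e2^2*sw^2 + A^4*e1^4*e2^4*sw^4)
  | 7%nat => (-12*B^4*cw*sw^3 - 4*B^4*cw^3*sw + 24*B^4*e2^2*cw*sw^5 + 32*B^4*e2^2*cw^3*sw^3 + 8*B^4*e2^2*cw^5*sw - 12*B^4*e2^4*cw*sw^7 - 28*B^4*e2^4*cw^3*sw^5 - 20*B^4*e2^4*cw^5*sw^3 - 4*B^4*e2^4*cw^7*sw + 8*B^4*e1^2*cw*sw^3 - 16*B^4*e1^2*e2^2*cw*sw^5 - 16*B^4*e1^2*e2^2*cw^3*sw^3 + 8*B^4*e1^2*e2^4*cw*sw^7 + 16*B^4*e1^2*e2^4*cw^3*sw^5 + 8*B^4*e1^2*e2^4*cw^5*sw^3 + 12*A*B^3*sw^3 + 12*A*B^3*cw^2*sw - 20*A*B^3*e2^2*sw^5 - 64*A*B^3*e2^2*cw^2*sw^3 - 12*A*B^3*e2^2*cw^4*sw + 8*A*B^3*e2^4*sw^7 + 48*A*B^3*e2^4*cw^2*sw^5 + 40*A*B^3*e2^4*cw^4*sw^3 - 8*A*B^3*e1^2*sw^3 + 16*A*B^3*e1^2*e2^2*sw^5 + 8*A*B^3*e1^2*e2^2*cw^2*sw^3 - 8*A*B^3*e1^2*e2^4*sw^7 - 8*A*B^3*e1^2*e2^4*cw^2*sw^5 - 12*A^2*B^2*cw*sw + 44*A^2*B^2*e2^2*cw*sw^3 +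 4*A^2*B^2*e2^2*cw^3*sw - 32*A^2*B^2*e2^4*cw*sw^5 - 8*A^2*B^2*e2^4*cw^3*sw^3 + 4*A^2*B^2*e1^2*cw*sw - 20*A^2*B^2*e1^2*e2^2*cw*sw^3 + 4*A^2*B^2*e1^2*e2^2*cw^3*sw + 16*A^2*B^2*e1^2*e2^4*cw*sw^5 - 8*A^2*B^2*e1^2*e2^4*cw^3*sw^3 + 4*A^3*B*sw - 8*A^3*B*e2^2*sw^3 + 4*A^3*B*e2^4*sw^5 - 4*A^3*B*e1^2*sw + 8*A^3*B*e1^2*e2^2*sw^3 - 4*A^3*B*e1^2*e2^4*sw^5)
  | 8%nat => (3*B^4*sw^4 + 6*B^4*cw^2*sw^2 - 6*B^4*e2^2*sw^6 - 18*B^4*e2^2*cw^2*sw^4 - 12*B^4*e2^2*cw^4*sw^2 + 3*B^4*e2^4*sw^8 + 12*B^4*e2^4*cw^2*sw^6 + 15*B^4*e2^4*cw^4*sw^4 + 6*B^4*e2^4*cw^6*sw^2 - 2*B^4*e1^2*sw^4 + 4*B^4*e1^2*e2^2*sw^6 + 4*B^4*e1^2*e2^2*cw^2*sw^4 - 2*B^4*e1^2*e2^4*sw^8 - 4*B^4*e1^2*e2^4*cw^2*sw^6 - 2*B^4*e1^2*e2^4*cw^4*sw^4 - 12*A*B^3*cw*sw^2 + 32*A*B^3*e2^2*cw*sw^4 + 12*A*B^3*e2^2*cw^3*sw^2 - 20*A*B^3*e2^4*cw*sw^6 - 20*A*B^3*e2^4*cw^3*sw^4 + 6*A^2*B^2*sw^2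 - 12*A^2*B^2*e2^2*sw^4 - 2*A^2*B^2*e2^2*cw^2*sw^2 + 6*A^2*B^2*e2^4*sw^6 + 2*A^2*B^2*e2^4*cw^2*sw^4 - 2*A^2*B^2*e1^2*sw^2 + 4*A^2*B^2*e1^2*e2^2*sw^4 - 2*A^2*B^2*e1^2*e2^2*cw^2*sw^2 - 2*A^2*B^2*e1^2*e2^4*sw^6 + 2*A^2*B^2*e1^2*e2^4*cw^2*sw^4)
  | 9%nat => (-4*B^4*cw*sw^3 + 8*B^4*e2^2*cw*sw^5 + 8*B^4*e2^2*cw^3*sw^3 - 4*B^4*e2^4*cw*sw^7 - 8*B^4*e2^4*cw^3*sw^5 - 4*B^4*e2^4*cw^5*sw^3 + 4*A*B^3*sw^3 - 8*A*B^3*e2^2*sw^5 - 4*A*B^3*e2^2*cw^2*sw^3 + 4*A*B^3*e2^4*sw^7 + 4*A*B^3*e2^4*cw^2*sw^5)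
  | 10%nat => (B^4*sw^4 - 2*B^4*e2^2*sw^6 - 2*B^4*e2^2*cw^2*sw^4 + B^4*e2^4*sw^8 + 2*B^4*e2^4*cw^2*sw^6 + B^4*e2^4*cw^4*sw^4)
  | _ => 0
  end.

Lemma gh_factor (A B e1 e2 cw sw x : R) :
  GG A B e1 e2 cw sw x 1 = (x^2 + 1) * sum_f_R0 (fun k => gc A B e1 e2 cw sw k * x^k) 10.
Proof. unfold GG, Gf, Lf, Pf, Qf, D1f, D2f. simpl sum_f_R0. unfold gc. ring. Qed.

Lemma gc10 A B e1 e2 cw sw : gc A B e1 e2 cw sw 10 = B^4*sw^4*(1 - e2^2*(cw^2+sw^2))^2.
Proof. unfold gc. ring. Qed.

Lemma final_g10 A B e1 e2 cw sw c s l1 l2 :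
  0 < s -> c^2 + s^2 = 1 -> cw^2 + sw^2 = 1 ->
  (l1*c - e1)^2 + (l1*s)^2 = 1 ->
  (l2*(c*cw+s*sw) - e2)^2 + (l2*(s*cw-c*sw))^2 = 1 ->
  Erel A B e1 e2 cw sw c s l1 l2 ->
  sum_f_R0 (fun k => gc A B e1 e2 cw sw k * (c/s)^k) 10 = 0.
Proof.
intros Hs Hcs Hw q1 q2 HE.
assert (HG := E_GG A B e1 e2 cw sw c s l1 l2 Hcs Hw q1 q2 HE).
replace c with ((c/s)*s) in HG by (field; lra).
rewrite GG_homog, gh_factor in HG.
assert (Hx : (c/s)^2 + 1 <> 0) by nra.
assert (Hs12 : s^12 <> 0) by (apply pow_nonzero; lra).
apply Rmult_integral in HG. destruct HG as [HG|HG]; [contradiction|].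
apply Rmult_integral in HG. destruct HG as [HG|HG]; [contradiction|exact HG].
Qed.

Definition good (A B e1 e2 cw sw c1 s1 c2 s2 c s l1 l2 : R) : Prop :=
  0 < s /\ c^2 + s^2 = 1 /\ c1 = l1*c - e1 /\ s1 = l1*s /\
  c2 = l2*(c*cw+s*sw) - e2 /\ s2 = l2*(s*cw-c*sw) /\ Erel A B e1 e2 cw sw c s l1 l2.

Lemma nonint p1 e1 p2 e2 cw sw c1 s1 c2 s2 :
  0 < p1 -> 0 < p2 -> 0 <= e1 < 1 -> 0 <= e2 < 1 -> cw^2 + sw^2 = 1 ->
  c1^2 + s1^2 = 1 -> c2^2 + s2^2 = 1 ->
  e2 <> 0 -> sw <> 0 ->
  DXf p1 e1 p2 e2 cw sw c1 s1 c2 s2 * (- s1) + DYf p1 e1 p2 e2 cw sw c1 s1 c2 s2 * (e1 + c1) = 0 ->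
  DXf p1 e1 p2 e2 cw sw c1 s1 c2 s2 * (e2*s2*(c2*cw - s2*sw) - (1+e2*c2)*(c2*sw + s2*cw))
  + DYf p1 e1 p2 e2 cw sw c1 s1 c2 s2 * (e2*s2*(c2*sw + s2*cw) + (1+e2*c2)*(c2*cw - s2*sw)) = 0 ->
  (DXf p1 e1 p2 e2 cw sw c1 s1 c2 s2 <> 0 \/ DYf p1 e1 p2 e2 cw sw c1 s1 c2 s2 <> 0) ->
  exists c s l1 l2, good (Ap p1 e1 e2) (Bp p2 e1 e2) e1 e2 cw sw c1 s1 c2 s2 c s l1 l2 /\
    sum_f_R0 (fun k => gc (Ap p1 e1 e2) (Bp p2 e1 e2) e1 e2 cw sw k * (c/s)^k) 10 = 0.
Proof.
intros Hp1 Hp2 He1 He2 Hw H1 H2 He2n Hswn Eq1 Eq2 HD.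
assert (Hu1 : 0 < 1 + e1*c1) by nra.
assert (Hu2 : 0 < 1 + e2*c2) by nra.
destruct (core1 p1 e1 p2 e2 cw sw c1 s1 c2 s2 He1 He2 Hw H1 H2 Eq1 Eq2 HD)
  as [c [s [l1 [l2 [Hcs [Hc1 [Hs1 [Hc2 [Hs2 H]]]]]]]]].
subst c1 s1 c2 s2.
assert (HE := core2 p1 e1 p2 e2 cw sw c s l1 l2 He1 He2 Hw Hcs H1 H2 ltac:(lra) ltac:(lra) H).
set (A := Ap p1 e1 e2) in *. set (B := Bp p2 e1 e2) in *.
assert (HB : B <> 0).
{ unfold B, Bp. apply Rmult_integral_contrapositive_currified.
  apply Rmult_integral_contrapositive_currified; lra. nra. }
assert (HG := E_GG A B e1 e2 cw sw c s l1 l2 Hcs Hw H1 H2 HE).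
assert (Hs0 : s <> 0).
{ intro Hs0. subst s. rewrite GG_s0, Hw in HG.
  assert (Hc : c^2 = 1) by lra.
  assert (Hc12 : c^12 = 1) by (replace (c^12) with ((c^2)^6) by ring; rewrite Hc; ring).
  rewrite Hc12 in HG.
  assert (0 < 1 - e2^2*1) by nra.
  assert (B^4*sw^4*(1 - e2^2*1)^2 <> 0).
  { apply Rmult_integral_contrapositive_currified. apply Rmult_integral_contrapositive_currified;
    apply pow_nonzero; auto. apply pow_nonzero; lra. }
  lra. }
destruct (Rlt_or_le 0 s) as [Hs|Hs].
- exists c, s, l1, l2. split.
  + repeat split; auto.
  + apply (final_g10 A B e1 e2 cw sw c s l1 l2); auto.
- assert (HE' := E_flip A B e1 e2 cw sw c s l1 l2 HE).
  exists (-c), (-s), (-l1), (-l2). split.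
  + repeat split; try lra; try ring. exact HE'.
  + apply (final_g10 A B e1 e2 cw sw (-c) (-s) (-l1) (-l2)); auto; try lra.
    all: try (rewrite <- H1; ring); try (rewrite <- H2; ring); try nra.
Qed.

Definition K2f (A B e1 cw sw : R) := (A*cw - B)^2*(1 - e1^2*cw^2) - A^2*e1^2*sw^2*cw^2.
Definition K3f (A B e2 cw sw : R) := (A - B*cw)^2*(1 - e2^2*cw^2) - B^2*e2^2*cw^2*sw^2.
Definition K4f (A B e1 e2 cw sw : R) :=
  (Pf A e1 (A - B*cw) (-(B*sw)))^2 * D2f e2 cw sw (A - B*cw) (-(B*sw))
  - (Qf B e2 cw sw (A - B*cw) (-(B*sw)))^2 * D1f e1 (A - B*cw) (-(B*sw)).

Lemma d1_sq e1 c s l1 : c^2 + s^2 = 1 -> (l1*c - e1)^2 + (l1*s)^2 = 1 ->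
  (l1 - e1*c)^2 = D1f e1 c s.
Proof.
intros Hcs q1. unfold D1f. assert (Hx : (l1*c - e1)^2 + (l1*s)^2 = l1^2*(c^2+s^2) - 2*l1*e1*c + e1^2) by ring.
rewrite Hcs in Hx. assert (Hy : c^2 = 1 - s^2) by lra. rewrite Hy. nra.
Qed.

Lemma d2_sq e2 cw sw c s l2 : c^2 + s^2 = 1 -> cw^2 + sw^2 = 1 ->
  (l2*(c*cw+s*sw) - e2)^2 + (l2*(s*cw-c*sw))^2 = 1 ->
  (l2 - e2*(c*cw+s*sw))^2 = D2f e2 cw sw c s.
Proof.
intros Hcs Hw q2. unfold D2f. set (c' := c*cw+s*sw) in *. set (s' := s*cw-c*sw) in *.
assert (Hu : c'^2 + s'^2 = 1).
{ unfold c', s'. replace ((c * cw + s * sw) ^ 2 + (s * cw - c * sw) ^ 2) with ((c^2+s^2)*(cw^2+sw^2)) by ring.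
  rewrite Hcs, Hw; ring. }
assert (Hx : (l2*c' - e2)^2 + (l2*s')^2 = l2^2*(c'^2+s'^2) - 2*l2*e2*c' + e2^2) by ring.
rewrite Hu in Hx. rewrite Hcs. assert (Hy : c'^2 = 1 - s'^2) by lra. nra.
Qed.

Lemma sq_cases (a b : R) : a^2 = b^2 -> a = b \/ a = - b.
Proof. intro H. assert ((a - b)*(a + b) = 0) by (ring_simplify; lra).
apply Rmult_integral in H0. destruct H0; [left|right]; lra. Qed.

Lemma sq_lt1 (e : R) : 0 <= e < 1 -> e^2 < 1.
Proof. intros; nra. Qed.

Lemma good_inj A B e1 e2 cw sw c1 s1 c2 s2 c1' s1' c2' s2' c s l1 l2 c' s' l1' l2' :
  0 <= e1 < 1 -> 0 <= e2 < 1 -> cw^2 + sw^2 = 1 ->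
  A <> 0 -> B <> 0 -> e1 <> 0 -> e2 <> 0 -> sw <> 0 ->
  K2f A B e1 cw sw <> 0 -> K3f A B e2 cw sw <> 0 -> K4f A B e1 e2 cw sw <> 0 ->
  c1^2 + s1^2 = 1 -> c2^2 + s2^2 = 1 -> c1'^2 + s1'^2 = 1 -> c2'^2 + s2'^2 = 1 ->
  good A B e1 e2 cw sw c1 s1 c2 s2 c s l1 l2 ->
  good A B e1 e2 cw sw c1' s1' c2' s2' c' s' l1' l2' ->
  c / s = c' / s' ->
  c1 = c1' /\ s1 = s1' /\ c2 = c2' /\ s2 = s2'.
Proof.
intros He1 He2 Hw HA HB He1n He2n Hsw HK2 HK3 HK4 U1 U2 U1' U2'
  [Hs [Hcs [Hc1 [Hs1 [Hc2 [Hs2 HE]]]]]] [Hs' [Hcs' [Hc1' [Hs1' [Hc2' [Hs2' HE']]]]]] Hx.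
subst c1 s1 c2 s2 c1' s1' c2' s2'.
set (x := c/s) in *.
assert (Hc : c = x*s) by (unfold x; field; lra).
assert (Hc' : c' = x*s') by (rewrite Hx; field; lra).
assert (Hss : s = s').
{ rewrite Hc in Hcs. rewrite Hc' in Hcs'.
  assert (Ha : s^2 * (x^2+1) = 1) by (transitivity ((x*s)^2 + s^2); [ring|exact Hcs]).
  assert (Hb : s'^2 * (x^2+1) = 1) by (transitivity ((x*s')^2 + s'^2); [ring|exact Hcs']).
  assert (Hx2 : x^2 + 1 <> 0) by (assert (0 <= x^2) by apply pow2_ge_0; lra).
  assert (s^2 = s'^2).
  { apply Rmult_eq_reg_r with (x^2+1); auto. lra. }
  apply sq_cases in H. destruct H; lra. }
subst s'. assert (Hcc : c' = c) by lra. clear Hc' Hx. subst c'.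
assert (Q1 := d1_sq e1 c s l1 Hcs U1). assert (Q1' := d1_sq e1 c s l1' Hcs U1').
assert (Q2 := d2_sq e2 cw sw c s l2 Hcs Hw U2). assert (Q2' := d2_sq e2 cw sw c s l2' Hcs Hw U2').
assert (HD1 : 0 < D1f e1 c s).
{ unfold D1f. assert (Hs2 : s^2 <= 1) by (assert (0 <= c^2) by apply pow2_ge_0; lra).
  assert (He : e1^2 < 1) by (apply sq_lt1; lra).
  assert (0 <= s^2) by apply pow2_ge_0.
  assert (e1^2 * s^2 <= e1^2 * 1) by (apply Rmult_le_compat_l; [apply pow2_ge_0|lra]). lra. }
assert (HD2 : 0 < D2f e2 cw sw c s).
{ unfold D2f. assert ((s*cw - c*sw)^2 <= 1).
  { assert (Hr : (s*cw - c*sw)^2 + (c*cw + s*sw)^2 = (c^2+s^2)*(cw^2+sw^2)) by ring.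
    rewrite Hcs, Hw in Hr. assert (0 <= (c*cw+s*sw)^2) by (apply pow2_ge_0). lra. }
  assert (He : e2^2 < 1) by (apply sq_lt1; lra).
  assert (e2^2 * (s*cw - c*sw)^2 <= e2^2 * 1) by (apply Rmult_le_compat_l; [apply pow2_ge_0|lra]).
  assert (0 <= c^2) by apply pow2_ge_0. assert (0 <= s^2) by apply pow2_ge_0. lra. }
unfold Erel in HE, HE'.
set (L := Lf A B cw sw c s) in *. set (P := Pf A e1 c s) in *. set (Q := Qf B e2 cw sw c s) in *.
set (d1 := l1 - e1*c) in *. set (d1' := l1' - e1*c) in *.
set (d2 := l2 - e2*(c*cw+s*sw)) in *. set (d2' := l2' - e2*(c*cw+s*sw)) in *.
assert (Hd1 : d1 <> 0) by (intro H0; rewrite H0 in Q1; lra).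
assert (Hd2 : d2 <> 0) by (intro H0; rewrite H0 in Q2; lra).
assert (E1 : d1' = d1 \/ d1' = - d1) by (apply sq_cases; lra).
assert (E2 : d2' = d2 \/ d2' = - d2) by (apply sq_cases; lra).
assert (Hfin : d1' = d1 /\ d2' = d2).
{ destruct E1 as [E1|E1]; destruct E2 as [E2|E2]; rewrite E1, E2 in HE'.
  - auto.
  - exfalso.
    assert (HQ : Q * d1 = 0) by lra.
    assert (HQ0 : Q = 0) by (apply Rmult_integral in HQ; destruct HQ; [auto|contradiction]).
    assert (HLP : L * d1 = P).
    { assert (HLP2 : (L * d1 - P) * d2 = 0) by lra.
      apply Rmult_integral in HLP2; destruct HLP2; [lra|contradiction]. }
    unfold Q, Qf in HQ0.
    apply Rmult_integral in HQ0. destruct HQ0 as [HQ0|HQ0].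
    + apply Rmult_integral in HQ0. destruct HQ0 as [HQ0|HQ0].
      * apply Rmult_integral in HQ0. destruct HQ0 as [HQ0|HQ0]; contradiction.
      *
        unfold L, P, Lf, Pf in HLP. rewrite HQ0 in HLP.
        assert (Hd : d1 = e1 * c).
        { apply Rmult_eq_reg_l with (A*s). replace (A*s*d1) with ((A*s - B*0)*d1) by ring.
          rewrite HLP. ring. apply Rmult_integral_contrapositive_currified; lra. }
        rewrite Hd in Q1. unfold D1f in Q1.
        assert (Hq : e1^2*c^2 + e1^2*s^2 = e1^2) by (transitivity (e1^2*(c^2+s^2)); [ring|rewrite Hcs; ring]).
        assert (He : e1^2 < 1) by (apply sq_lt1; lra). lra.
    +
      set (k := s*cw - c*sw) in *.
      assert (Hcc : c = - k * sw).
      { assert (Hr : c * (cw^2 + sw^2) = (c*cw + s*sw)*cw - k*sw) by (unfold k; ring).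
        rewrite Hw, HQ0 in Hr. lra. }
      assert (Hsc : s = k * cw).
      { assert (Hr : s * (cw^2 + sw^2) = (c*cw + s*sw)*sw + k*cw) by (unfold k; ring).
        rewrite Hw, HQ0 in Hr. lra. }
      assert (Hk : k^2 = 1).
      { rewrite Hcc, Hsc in Hcs. replace ((- k * sw) ^ 2 + (k * cw) ^ 2) with (k^2*(cw^2+sw^2)) in Hcs by ring.
        rewrite Hw in Hcs. lra. }
      assert (HL2 : L^2 * D1f e1 c s - P^2 = 0).
      { rewrite <- Q1. rewrite <- HLP. ring. }
      assert (Hid : L^2 * D1f e1 c s - P^2 =
         (k^2)^2 * ((A*cw - B*(cw^2+sw^2))^2*((cw^2+sw^2) - e1^2*cw^2) - A^2*e1^2*cw^2*sw^2)).
      { unfold L, P, Lf, Pf, D1f. rewrite Hcc, Hsc. ring. }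
      rewrite Hid, Hk, Hw in HL2. apply HK2. unfold K2f. lra.
  - exfalso.
    assert (HP : P * d2 = 0) by lra.
    assert (HP0 : P = 0) by (apply Rmult_integral in HP; destruct HP; [auto|contradiction]).
    assert (HLQ : L * d2 = - Q).
    { assert (HLQ2 : (L * d2 + Q) * d1 = 0) by lra.
      apply Rmult_integral in HLQ2; destruct HLQ2; [lra|contradiction]. }
    assert (Hc0 : c = 0).
    { unfold P, Pf in HP0. apply Rmult_integral in HP0. destruct HP0 as [HP0|HP0]; auto.
      apply Rmult_integral in HP0. destruct HP0 as [HP0|HP0]; [|lra].
      apply Rmult_integral in HP0. destruct HP0; contradiction. }
    assert (Hs1 : s = 1).
    { rewrite Hc0 in Hcs. assert ((s-1)*(s+1) = 0) by (ring_simplify; lra).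
      apply Rmult_integral in H. destruct H; lra. }
    assert (HL2 : L^2 * D2f e2 cw sw c s - Q^2 = 0).
    { rewrite <- Q2. replace (Q^2) with ((-Q)^2) by ring. rewrite <- HLQ. ring. }
    unfold L, Q, Lf, Qf, D2f in HL2. rewrite Hc0, Hs1 in HL2.
    apply HK3. unfold K3f. rewrite <- HL2. ring.
  - exfalso.
    assert (HL : L * (d1 * d2) = 0) by lra.
    assert (HL0 : L = 0).
    { apply Rmult_integral in HL. destruct HL as [HL|HL]; auto.
      apply Rmult_integral in HL. destruct HL; contradiction. }
    assert (HPQ : P * d2 = Q * d1) by lra.
    assert (HPQ2 : P^2 * D2f e2 cw sw c s - Q^2 * D1f e1 c s = 0).
    { rewrite <- Q1, <- Q2. replace (P ^ 2 * d2 ^ 2) with ((P*d2)^2) by ring. rewrite HPQ. ring. }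
    set (u := A - B*cw). set (v := -(B*sw)).
    assert (Huv : u^2 + v^2 <> 0).
    { assert (v <> 0) by (unfold v; intro H; apply Ropp_eq_0_compat in H; rewrite Ropp_involutive in H;
        apply Rmult_integral in H; destruct H; contradiction).
      assert (0 < v^2) by (apply pow2_gt_0; auto). assert (0 <= u^2) by apply pow2_ge_0. lra. }
    set (mu := (c*u + s*v)/(u^2+v^2)).
    assert (HLu : s*u - c*v = 0) by (rewrite <- HL0; unfold L, Lf, u, v; ring).
    assert (Hcu : c = mu * u).
    { unfold mu. apply Rmult_eq_reg_r with (u^2+v^2); auto.
      field_simplify; auto. replace (c*u^2 + c*v^2) with ((c*u + s*v)*u - v*(s*u - c*v)) by ring.
      rewrite HLu. ring. }
    assert (Hsu : s = mu * v).
    { unfold mu. apply Rmult_eq_reg_r with (u^2+v^2); auto.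
      field_simplify; auto. replace (s*u^2 + s*v^2) with ((c*u + s*v)*v + u*(s*u - c*v)) by ring.
      rewrite HLu. ring. }
    assert (Hmu : mu <> 0) by (intro H; rewrite H in Hcu, Hsu; rewrite Hcu, Hsu in Hcs; lra).
    assert (Hid : P^2 * D2f e2 cw sw c s - Q^2 * D1f e1 c s = mu^6 * K4f A B e1 e2 cw sw).
    { unfold P, Q, K4f, Pf, Qf, D1f, D2f. fold u v. rewrite Hcu, Hsu. ring. }
    rewrite Hid in HPQ2. apply Rmult_integral in HPQ2. destruct HPQ2 as [H|H].
    + apply (pow_nonzero mu 6) in Hmu. contradiction.
    + contradiction. }
destruct Hfin as [F1 F2].
assert (l1' = l1) by (unfold d1, d1' in F1; lra).
assert (l2' = l2) by (unfold d2, d2' in F2; lra).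
subst l1' l2'. repeat split; reflexivity.
Qed.

Lemma u_pos e f : 0 <= e < 1 -> 0 < 1 + e * cos f.
Proof. intros He. assert (H := COS_bound f). assert (e * cos f >= - e) by nra. lra. Qed.

Lemma der1 p1 e1 p2 e2 om f1 f2 : 0 <= e1 < 1 -> 0 <= e2 < 1 ->
  is_derive (fun x => dist2 p1 e1 p2 e2 om x f2) f1
   (2 * p1 / (1 + e1 * cos f1)^2 *
    ((p1/(1+e1*cos f1)*cos f1 - p2/(1+e2*cos f2)*cos (f2+om)) * (- sin f1)
     + (p1/(1+e1*cos f1)*sin f1 - p2/(1+e2*cos f2)*sin (f2+om)) * (e1*(sin f1^2 + cos f1^2) + cos f1))).
Proof.
intros He1 He2. assert (Hu1 := u_pos e1 f1 He1). assert (Hu2 := u_pos e2 f2 He2).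
unfold dist2, X1, X2; simpl.
auto_derive.
- repeat split; lra.
- field. lra.
Qed.

Lemma der2 p1 e1 p2 e2 om f1 f2 : 0 <= e1 < 1 -> 0 <= e2 < 1 ->
  is_derive (fun y => dist2 p1 e1 p2 e2 om f1 y) f2
   (- 2 * p2 / (1 + e2 * cos f2)^2 *
    ((p1/(1+e1*cos f1)*cos f1 - p2/(1+e2*cos f2)*cos (f2+om)) *
       (e2*sin f2*cos (f2+om) - (1+e2*cos f2)*sin (f2+om))
     + (p1/(1+e1*cos f1)*sin f1 - p2/(1+e2*cos f2)*sin (f2+om)) *
       (e2*sin f2*sin (f2+om) + (1+e2*cos f2)*cos (f2+om)))).
Proof.
intros He1 He2. assert (Hu1 := u_pos e1 f1 He1). assert (Hu2 := u_pos e2 f2 He2).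
unfold dist2, X1, X2; simpl.
auto_derive.
- repeat split; lra.
- field. lra.
Qed.

Definition Qval (p1 p2 e1 e2 cw sw : R) : R :=
  e1 * e2 * sw * K2f (Ap p1 e1 e2) (Bp p2 e1 e2) e1 cw sw * K3f (Ap p1 e1 e2) (Bp p2 e1 e2) e2 cw sw
  * K4f (Ap p1 e1 e2) (Bp p2 e1 e2) e1 e2 cw sw.

Definition tsub a b := PA a (PN b).
Definition tsq a := PM a a.
Definition tone := PC 1.
Definition tA := PM (PM (PV 0) (PV 2)) (tsub tone (tsq (PV 3))).
Definition tB := PM (PM (PV 1) (PV 3)) (tsub tone (tsq (PV 2))).
Definition tPf a e c s := PM (PM (PM a e) s) c.
Definition tQf b e cw sw c s := PM (PM (PM b e) (tsub (PM s cw) (PM c sw))) (PA (PM c cw) (PM s sw)).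
Definition tD1f e c s := tsub (PA (tsq c) (tsq s)) (PM (tsq e) (tsq s)).
Definition tD2f e cw sw c s := tsub (PA (tsq c) (tsq s)) (PM (tsq e) (tsq (tsub (PM s cw) (PM c sw)))).
Definition tK2 := tsub (PM (tsq (tsub (PM tA (PV 4)) tB)) (tsub tone (PM (tsq (PV 2)) (tsq (PV 4)))))
                       (PM (PM (PM (tsq tA) (tsq (PV 2))) (tsq (PV 5))) (tsq (PV 4))).
Definition tK3 := tsub (PM (tsq (tsub tA (PM tB (PV 4)))) (tsub tone (PM (tsq (PV 3)) (tsq (PV 4)))))
                       (PM (PM (PM (tsq tB) (tsq (PV 3))) (tsq (PV 4))) (tsq (PV 5))).
Definition tu := tsub tA (PM tB (PV 4)).
Definition tv := PN (PM tB (PV 5)).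
Definition tK4 := tsub (PM (tsq (tPf tA (PV 2) tu tv)) (tD2f (PV 3) (PV 4) (PV 5) tu tv))
                       (PM (tsq (tQf tB (PV 3) (PV 4) (PV 5) tu tv)) (tD1f (PV 2) tu tv)).
Definition tQ := PM (PM (PM (PM (PM (PV 2) (PV 3)) (PV 5)) tK2) tK3) tK4.
Definition Qpoly : poly6 := topoly tQ.

Lemma Qpoly_eval p1 p2 e1 e2 cw sw :
  eval_poly6 Qpoly p1 p2 e1 e2 cw sw = Qval p1 p2 e1 e2 cw sw.
Proof.
unfold Qpoly. rewrite eval_topoly. simpl.
unfold Qval, K2f, K3f, K4f, Ap, Bp, Pf, Qf, D1f, D2f. ring.
Qed.

Lemma Qval_pt : Qval 1 1 (1/2) (1/3) 0 1 <> 0.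
Proof.
replace (Qval 1 1 (1/2) (1/3) 0 1) with (608285/2380311484416)
  by (unfold Qval, K2f, K3f, K4f, Ap, Bp, Pf, Qf, D1f, D2f; field).
apply Rgt_not_eq. apply Rdiv_lt_0_compat; lra.
Qed.

Lemma torus_uniq_le f g : 0 <= f < 2*PI -> 0 <= g < 2*PI -> f <= g ->
  cos f = cos g -> sin f = sin g -> f = g.
Proof.
intros Hf Hg Hle Hc Hs.
set (d := g - f).
assert (Hcd : cos d = 1).
{ unfold d. rewrite cos_minus, <- Hc, <- Hs. assert (H := sin2_cos2 f). unfold Rsqr in H. lra. }
assert (Hd : cos (2 * (d/2)) = 1) by (replace (2*(d/2)) with d by field; exact Hcd).
rewrite cos_2a_sin in Hd.
assert (Hsin : sin (d/2) = 0) by nra.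
destruct (Req_dec d 0) as [H0|H0]; [unfold d in H0; lra|].
assert (0 < sin (d/2)) by (apply sin_gt_0; unfold d in *; lra).
lra.
Qed.

Lemma torus_uniq f g : 0 <= f < 2*PI -> 0 <= g < 2*PI ->
  cos f = cos g -> sin f = sin g -> f = g.
Proof.
intros Hf Hg Hc Hs. destruct (Rle_dec f g).
- apply torus_uniq_le; auto.
- symmetry. apply torus_uniq_le; auto. lra.
Qed.

Lemma inter_lin p1 e1 p2 e2 cw sw c1 s1 c2 s2 :
  0 < p1 -> 0 < p2 -> 0 <= e1 < 1 -> 0 <= e2 < 1 -> cw^2 + sw^2 = 1 ->
  c1^2 + s1^2 = 1 -> c2^2 + s2^2 = 1 ->
  0 < 1 + e1*c1 -> 0 < 1 + e2*c2 ->
  DXf p1 e1 p2 e2 cw sw c1 s1 c2 s2 = 0 -> DYf p1 e1 p2 e2 cw sw c1 s1 c2 s2 = 0 ->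
  c2 = c1*cw + s1*sw /\ s2 = s1*cw - c1*sw /\
  (p1*e2*cw - p2*e1) * c1 + (p1*e2*sw) * s1 = p2 - p1.
Proof.
intros Hp1 Hp2 He1 He2 Hw H1 H2 Hu1 Hu2 HX HY.
unfold DXf, DYf in *.
set (r1 := p1/(1+e1*c1)) in *. set (r2 := p2/(1+e2*c2)) in *.
set (C := c2*cw - s2*sw) in *. set (S := c2*sw + s2*cw) in *.
assert (Hr1 : 0 < r1) by (unfold r1; apply Rdiv_lt_0_compat; lra).
assert (Hr2 : 0 < r2) by (unfold r2; apply Rdiv_lt_0_compat; lra).
assert (HCS : C^2 + S^2 = 1).
{ unfold C, S. replace ((c2 * cw - s2 * sw) ^ 2 + (c2 * sw + s2 * cw) ^ 2) with ((c2^2+s2^2)*(cw^2+sw^2)) by ring.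
  rewrite H2, Hw. ring. }
assert (Hrr : r1 = r2).
{ assert (Hsq : r1^2 = r2^2).
  { transitivity (r1^2*(c1^2+s1^2)); [rewrite H1; ring|].
    transitivity (r2^2*(C^2+S^2)); [|rewrite HCS; ring].
    replace (r1^2*(c1^2+s1^2)) with ((r1*c1)^2 + (r1*s1)^2) by ring.
    replace (r1*c1) with (r2*C) by lra. replace (r1*s1) with (r2*S) by lra. ring. }
  assert ((r1 - r2)*(r1+r2) = 0) by (ring_simplify; lra).
  apply Rmult_integral in H. destruct H; lra. }
assert (Hc1 : c1 = C).
{ apply Rmult_eq_reg_l with r1; [|lra]. rewrite Hrr at 2. lra. }
assert (Hs1 : s1 = S).
{ apply Rmult_eq_reg_l with r1; [|lra]. rewrite Hrr at 2. lra. }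
assert (Hc2 : c2 = c1*cw + s1*sw).
{ rewrite Hc1, Hs1. unfold C, S. transitivity (c2*(cw^2+sw^2)); [rewrite Hw; ring|ring]. }
assert (Hs2 : s2 = s1*cw - c1*sw).
{ rewrite Hc1, Hs1. unfold C, S. transitivity (s2*(cw^2+sw^2)); [rewrite Hw; ring|ring]. }
split; [exact Hc2|]. split; [exact Hs2|].
assert (Hpu : p1 * (1 + e2*c2) = p2 * (1 + e1*c1)).
{ unfold r1, r2 in Hrr.
  apply Rmult_eq_reg_r with (/ ((1+e1*c1)*(1+e2*c2))).
  - field_simplify; [|lra|lra]. field_simplify in Hrr; [|lra|lra]. lra.
  - apply Rinv_neq_0_compat. apply Rmult_integral_contrapositive_currified; lra. }
rewrite Hc2 in Hpu. lra.
Qed.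

Lemma sc1 x : sin x ^ 2 + cos x ^ 2 = 1.
Proof. assert (H := sin2_cos2 x). unfold Rsqr in H. simpl. lra. Qed.
Lemma cs1 x : cos x ^ 2 + sin x ^ 2 = 1.
Proof. rewrite Rplus_comm. apply sc1. Qed.

Lemma prod_nz a b : a * b <> 0 -> a <> 0 /\ b <> 0.
Proof. intro H. split; intro H0; apply H; rewrite H0; ring. Qed.

Lemma dist_eq p1 e1 p2 e2 om f1 f2 :
  dist2 p1 e1 p2 e2 om f1 f2 =
  (DXf p1 e1 p2 e2 (cos om) (sin om) (cos f1) (sin f1) (cos f2) (sin f2))^2 +
  (DYf p1 e1 p2 e2 (cos om) (sin om) (cos f1) (sin f1) (cos f2) (sin f2))^2.
Proof. unfold dist2, X1, X2, DXf, DYf; simpl. rewrite cos_plus, sin_plus. ring. Qed.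

Lemma crit_eqs p1 e1 p2 e2 om f1 f2 :
  admissible p1 e1 p2 e2 -> crit_pt p1 e1 p2 e2 om f1 f2 ->
  DXf p1 e1 p2 e2 (cos om) (sin om) (cos f1) (sin f1) (cos f2) (sin f2) * (- sin f1)
  + DYf p1 e1 p2 e2 (cos om) (sin om) (cos f1) (sin f1) (cos f2) (sin f2) * (e1 + cos f1) = 0 /\
  DXf p1 e1 p2 e2 (cos om) (sin om) (cos f1) (sin f1) (cos f2) (sin f2) *
     (e2*sin f2*(cos f2*cos om - sin f2*sin om) - (1+e2*cos f2)*(cos f2*sin om + sin f2*cos om))
  + DYf p1 e1 p2 e2 (cos om) (sin om) (cos f1) (sin f1) (cos f2) (sin f2) *
     (e2*sin f2*(cos f2*sin om + sin f2*cos om) + (1+e2*cos f2)*(cos f2*cos om - sin f2*sin om)) = 0.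
Proof.
intros [Hp1 [Hp2 [He1 He2]]] [H1 H2].
assert (Hu1 := u_pos e1 f1 He1). assert (Hu2 := u_pos e2 f2 He2).
assert (D1 := der1 p1 e1 p2 e2 om f1 f2 He1 He2).
assert (D2 := der2 p1 e1 p2 e2 om f1 f2 He1 He2).
apply is_derive_unique in D1. apply is_derive_unique in D2.
apply is_derive_unique in H1. apply is_derive_unique in H2.
rewrite H1 in D1. rewrite H2 in D2.
rewrite sc1 in D1. rewrite cos_plus, sin_plus in D2.
unfold DXf, DYf. rewrite cos_plus, sin_plus in D1.
split.
- symmetry in D1. apply Rmult_integral in D1. destruct D1 as [D1|D1].
  + exfalso. assert (0 < 2 * p1 / (1 + e1 * cos f1) ^ 2).
    { apply Rdiv_lt_0_compat; [lra|]. apply pow_lt; lra. } lra.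
  + rewrite <- D1. ring.
- symmetry in D2. apply Rmult_integral in D2. destruct D2 as [D2|D2].
  + exfalso. assert (0 < 2 * p2 / (1 + e2 * cos f2) ^ 2).
    { apply Rdiv_lt_0_compat; [lra|]. apply pow_lt; lra. }
    assert (- 2 * p2 / (1 + e2 * cos f2) ^ 2 = - (2 * p2 / (1 + e2 * cos f2) ^ 2)) by (field; lra).
    lra.
  + rewrite <- D2. ring.
Qed.

Lemma bound10 p1 e1 p2 e2 om2 :
  admissible p1 e1 p2 e2 -> nondegenerate Qpoly p1 e1 p2 e2 om2 ->
  forall l : list (R * R), NoDup l ->
    (forall f, In f l -> in_torus f /\ crit_pt p1 e1 p2 e2 om2 (fst f) (snd f) /\
        dist2 p1 e1 p2 e2 om2 (fst f) (snd f) <> 0) ->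
    (length l <= 10)%nat.
Proof.
intros Hadm Hnd l Hl Hf.
assert (Hadm' := Hadm). destruct Hadm' as [Hp1 [Hp2 [He1 He2]]].
unfold nondegenerate in Hnd. rewrite Qpoly_eval in Hnd. unfold Qval in Hnd.
set (cw := cos om2) in *. set (sw := sin om2) in *.
assert (Hw : cw^2 + sw^2 = 1) by (apply cs1).
set (A := Ap p1 e1 e2) in *. set (B := Bp p2 e1 e2) in *.
apply prod_nz in Hnd. destruct Hnd as [Hnd HK4].
apply prod_nz in Hnd. destruct Hnd as [Hnd HK3].
apply prod_nz in Hnd. destruct Hnd as [Hnd HK2].
apply prod_nz in Hnd. destruct Hnd as [Hnd Hsw].
apply prod_nz in Hnd. destruct Hnd as [He1n He2n].
assert (HA : A <> 0).
{ unfold A, Ap. apply Rmult_integral_contrapositive_currified.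
  apply Rmult_integral_contrapositive_currified; lra. assert (e2^2 < 1) by nra. lra. }
assert (HB : B <> 0).
{ unfold B, Bp. apply Rmult_integral_contrapositive_currified.
  apply Rmult_integral_contrapositive_currified; lra. assert (e1^2 < 1) by nra. lra. }
apply (count_le (fun f x => exists c s l1 l2,
   good A B e1 e2 cw sw (cos (fst f)) (sin (fst f)) (cos (snd f)) (sin (snd f)) c s l1 l2 /\ x = c/s)
   10 (gc A B e1 e2 cw sw) l).
- rewrite gc10, Hw. assert (0 < 1 - e2^2*1) by nra.
  apply Rmult_integral_contrapositive_currified. apply Rmult_integral_contrapositive_currified;
  apply pow_nonzero; auto. apply pow_nonzero; lra.
- exact Hl.
- intros f Hin. destruct (Hf f Hin) as [Ht [Hc Hd]].
  destruct (crit_eqs p1 e1 p2 e2 om2 (fst f) (snd f) Hadm Hc) as [E1 E2].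
  assert (HD : DXf p1 e1 p2 e2 cw sw (cos (fst f)) (sin (fst f)) (cos (snd f)) (sin (snd f)) <> 0 \/
               DYf p1 e1 p2 e2 cw sw (cos (fst f)) (sin (fst f)) (cos (snd f)) (sin (snd f)) <> 0).
  { rewrite dist_eq in Hd. destruct (Req_dec (DXf p1 e1 p2 e2 cw sw (cos (fst f)) (sin (fst f)) (cos (snd f)) (sin (snd f))) 0) as [h|h]; [right|left; exact h].
    intro h'. apply Hd. fold cw sw. rewrite h, h'. ring. }
  destruct (nonint p1 e1 p2 e2 cw sw (cos (fst f)) (sin (fst f)) (cos (snd f)) (sin (snd f))
     Hp1 Hp2 He1 He2 Hw (cs1 _) (cs1 _) He2n Hsw E1 E2 HD) as [c [s [l1 [l2 [Hg Hsum]]]]].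
  exists (c/s). split; [exists c, s, l1, l2; split; auto | exact Hsum].
- intros f f' x Hin Hin' [c [s [l1 [l2 [Hg Hx]]]]] [c' [s' [l1' [l2' [Hg' Hx']]]]].
  destruct (good_inj A B e1 e2 cw sw _ _ _ _ _ _ _ _ c s l1 l2 c' s' l1' l2'
    He1 He2 Hw HA HB He1n He2n Hsw HK2 HK3 HK4 (cs1 _) (cs1 _) (cs1 _) (cs1 _) Hg Hg' ltac:(congruence))
    as [Ea [Eb [Ec Ed]]].
  destruct (Hf f Hin) as [[Ht1 Ht2] _]. destruct (Hf f' Hin') as [[Ht1' Ht2'] _].
  destruct f as [f1 f2]; destruct f' as [f1' f2']; simpl in *.
  rewrite (torus_uniq f1 f1' Ht1 Ht1' Ea Eb), (torus_uniq f2 f2' Ht2 Ht2' Ec Ed). reflexivity.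
Qed.

Lemma filter_split {A : Type} (p : A -> bool) (l : list A) :
  length l = (length (filter p l) + length (filter (fun x => negb (p x)) l))%nat.
Proof. induction l as [|a l IH]; simpl; auto. destruct (p a); simpl; lia. Qed.

Definition qa (a b k : R) (i : nat) : R :=
  match i with O => k^2 - b^2 | S O => -2*a*k | _ => a^2 + b^2 end.

Lemma bound2 p1 e1 p2 e2 om2 :
  admissible p1 e1 p2 e2 -> nondegenerate Qpoly p1 e1 p2 e2 om2 ->
  forall l : list (R * R), NoDup l ->
    (forall f, In f l -> in_torus f /\ crit_pt p1 e1 p2 e2 om2 (fst f) (snd f) /\
        dist2 p1 e1 p2 e2 om2 (fst f) (snd f) = 0) ->
    (length l <= 2)%nat.
Proof.
intros Hadm Hnd l Hl Hf.
assert (Hadm' := Hadm). destruct Hadm' as [Hp1 [Hp2 [He1 He2]]].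
unfold nondegenerate in Hnd. rewrite Qpoly_eval in Hnd. unfold Qval in Hnd.
set (cw := cos om2) in *. set (sw := sin om2) in *.
assert (Hw : cw^2 + sw^2 = 1) by (apply cs1).
apply prod_nz in Hnd. destruct Hnd as [Hnd _].
apply prod_nz in Hnd. destruct Hnd as [Hnd _].
apply prod_nz in Hnd. destruct Hnd as [Hnd _].
apply prod_nz in Hnd. destruct Hnd as [Hnd Hsw].
apply prod_nz in Hnd. destruct Hnd as [He1n He2n].
set (a := p1*e2*cw - p2*e1). set (b := p1*e2*sw). set (k := p2 - p1).
assert (Hb : b <> 0) by (unfold b; repeat apply Rmult_integral_contrapositive_currified; lra).
assert (Hlin : forall f, In f l ->
   cos (snd f) = cos (fst f)*cw + sin (fst f)*sw /\ sin (snd f) = sin (fst f)*cw - cos (fst f)*sw /\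
   a * cos (fst f) + b * sin (fst f) = k).
{ intros f Hin. destruct (Hf f Hin) as [_ [_ Hd]].
  rewrite dist_eq in Hd. fold cw sw in Hd.
  set (X := DXf p1 e1 p2 e2 cw sw (cos (fst f)) (sin (fst f)) (cos (snd f)) (sin (snd f))) in *.
  set (Y := DYf p1 e1 p2 e2 cw sw (cos (fst f)) (sin (fst f)) (cos (snd f)) (sin (snd f))) in *.
  assert (HX : X = 0) by nra. assert (HY : Y = 0) by nra.
  apply (inter_lin p1 e1 p2 e2 cw sw); auto; try apply cs1; try apply u_pos; auto. }
apply (count_le (fun f y => y = cos (fst f)) 2 (qa a b k) l).
- simpl. assert (0 < b^2) by (apply pow2_gt_0; auto). assert (0 <= a^2) by apply pow2_ge_0. lra.
- exact Hl.
- intros f Hin. exists (cos (fst f)). split; auto.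
  destruct (Hlin f Hin) as [_ [_ HL]].
  simpl. set (c1 := cos (fst f)) in *. set (s1 := sin (fst f)) in *.
  assert (Hu : c1^2 + s1^2 = 1) by apply cs1.
  transitivity (b^2*(c1^2 + s1^2 - 1) + (a*c1 + b*s1 - k)*(a*c1 - b*s1 - k)).
  { unfold qa. ring. }
  rewrite Hu, HL. ring.
- intros f f' y Hin Hin' Hy Hy'.
  destruct (Hlin f Hin) as [Hc2 [Hs2 HL]]. destruct (Hlin f' Hin') as [Hc2' [Hs2' HL']].
  destruct (Hf f Hin) as [[Ht1 Ht2] _]. destruct (Hf f' Hin') as [[Ht1' Ht2'] _].
  destruct f as [f1 f2]; destruct f' as [f1' f2']; simpl in *.
  assert (Ec : cos f1 = cos f1') by congruence.
  assert (Es : sin f1 = sin f1').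
  { apply Rmult_eq_reg_l with b; auto. rewrite Ec in HL. lra. }
  assert (E1 : f1 = f1') by (apply torus_uniq; auto).
  subst f1'. assert (E2 : f2 = f2') by (apply torus_uniq; auto; congruence).
  subst f2'. reflexivity.
Qed.

Theorem mainTheorem3 :
  exists Q : poly6,
    (exists p1 e1 p2 e2 om2,
        admissible p1 e1 p2 e2 /\ nondegenerate Q p1 e1 p2 e2 om2) /\
    (forall p1 e1 p2 e2 om2,
        admissible p1 e1 p2 e2 -> nondegenerate Q p1 e1 p2 e2 om2 ->
        (forall l : list (R * R),
            NoDup l ->
            (forall f, In f l ->
               in_torus f /\ crit_pt p1 e1 p2 e2 om2 (fst f) (snd f) /\
               dist2 p1 e1 p2 e2 om2 (fst f) (snd f) <> 0) ->
            (length l <= 10)%nat) /\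
        (forall l : list (R * R),
            NoDup l ->
            (forall f, In f l ->
               in_torus f /\ crit_pt p1 e1 p2 e2 om2 (fst f) (snd f)) ->
            (length l <= 12)%nat)).
Proof.
exists Qpoly. split.
- exists 1, (1/2), 1, (1/3), (PI/2). split.
  + unfold admissible. lra.
  + unfold nondegenerate. rewrite Qpoly_eval, cos_PI2, sin_PI2. exact Qval_pt.
- intros p1 e1 p2 e2 om2 Hadm Hnd. split.
  + apply bound10; auto.
  + intros l Hl Hf.
    set (dz := fun f : R * R => if Req_EM_T (dist2 p1 e1 p2 e2 om2 (fst f) (snd f)) 0 then true else false).
    rewrite (filter_split dz l).
    assert (H1 : (length (filter dz l) <= 2)%nat).
    { apply (bound2 p1 e1 p2 e2 om2 Hadm Hnd); [apply NoDup_filter; auto|].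
      intros f Hin. apply filter_In in Hin. destruct Hin as [Hin Hdz].
      destruct (Hf f Hin) as [Ht Hc]. split; [exact Ht|split; [exact Hc|]].
      unfold dz in Hdz. cbv beta in Hdz. destruct (Req_EM_T (dist2 p1 e1 p2 e2 om2 (fst f) (snd f)) 0); simpl in Hdz; try discriminate; auto. }
    assert (H2 : (length (filter (fun x => negb (dz x)) l) <= 10)%nat).
    { apply (bound10 p1 e1 p2 e2 om2 Hadm Hnd); [apply NoDup_filter; auto|].
      intros f Hin. apply filter_In in Hin. destruct Hin as [Hin Hdz].
      destruct (Hf f Hin) as [Ht Hc]. split; [exact Ht|split; [exact Hc|]].
      unfold dz in Hdz. cbv beta in Hdz. destruct (Req_EM_T (dist2 p1 e1 p2 e2 om2 (fst f) (snd f)) 0); simpl in Hdz; try discriminate; auto. }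
    lia.
Qed.
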